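(* For each $\Sigma^B_0$-formula $\varphi(\bar x)$ of $\mathcal L_{\mathsf{LAP}}$ there is an $\mathcal L_{\mathsf{LAP}}$-term $\delta_\varphi(\bar x)$ of field sort such that $\mathsf{LAP}\vdash\varphi(\bar x)\rightarrow\delta_\varphi(\bar x)=1$ and $\mathsf{LAP}\vdash\neg\varphi(\bar x)\rightarrow\delta_\varphi(\bar x)=0$. In particular $\mathsf{LAP}\vdash\varphi(\bar x)\leftrightarrow\delta_\varphi(\bar x)=1$, so every $\Sigma^B_0$-formula is $\mathsf{LAP}$-provably equivalent to an open formula.
   Context: $\mathsf{LAP}$ is a three-sorted first-order theory (sorts index, field, matrix) in language $\mathcal L_{\mathsf{LAP}}$: index sort with $0,1,+,*,\dot-,\mathrm{div},\mathrm{rem},\le,=$; field sort with $0,1,+,*,-,(\cdot)^{-1},=$; matrix functions $\mathrm r(A),\mathrm c(A)$ (rows, columns), $\mathrm e(A,i,j)$ (entries), $\Sigma(A)$ (sum of entries), $\mathrm P(k,A)$ (powers), matrix equality; plus iteratively added conditional function symbols (index- or field-valued, selecting between two arguments by an open formula in index variables) and $\lambda$-terms $\lambda ij\langle m,n,t\rangle$. Axioms: equality axioms, open induction on the index sort, index sort the nonnegative part of a discretely ordered ring with modified subtraction and division with remainder, the field sort a field with $aa^{-1}=1$ for $a\neq0$, defining axioms of conditionals and $\lambda$-terms, entries zero outside the index range, matrix extensionality, recursive definition of $\Sigma$, and $\mathrm P(0,A)=I$, $\mathrm P(k+1,A)=\mathrm P(k,A)A$ for square $A$. A formula of $\mathcal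 L_{\mathsf{LAP}}$ is $\Sigma^B_0$ if all its quantifiers are over the index sort and bounded by terms. *)

(* Defs.v *)
(* Variables are de Bruijn indices, one index space per
   sort (index / field / matrix). *)
From Stdlib Require Import Bool.

Inductive iterm : Type :=
| IVar   : nat -> iterm
| IZero  : iterm
| IOne   : iterm
| IAdd   : iterm -> iterm -> iterm
| IMul   : iterm -> iterm -> iterm
| IMonus : iterm -> iterm -> iterm
| IDiv   : iterm -> iterm -> iterm
| IRem   : iterm -> iterm -> iterm
| IRows  : mterm -> iterm
| ICols  : mterm -> iterm
| ICond  : iform -> iterm -> iterm -> iterm
with fterm : Type :=
| FVar   : nat -> fterm
| FZero  : fterm
| FOne   : fterm
| FAdd   : fterm -> fterm -> fterm
| FMul   : fterm -> fterm -> fterm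
| FOpp   : fterm -> fterm
| FInv   : fterm -> fterm
| FEntry : mterm -> iterm -> iterm -> fterm
| FSum   : mterm -> fterm
| FCond  : iform -> fterm -> fterm -> fterm
with mterm : Type :=
| MVar   : nat -> mterm
| MPow   : iterm -> mterm -> mterm
| MLam   : iterm -> iterm -> fterm -> mterm
  (* MLam m n t = lambda i j <m,n,t>; in t, index variable 1 is i and
     index variable 0 is j (both bound). *)
with iform : Type :=
| QLe  : iterm -> iterm -> iform
| QEq  : iterm -> iterm -> iform
| QNot : iform -> iform
| QAnd : iform -> iform -> iform
| QOr  : iform -> iform -> iform.

Inductive form : Type :=
| Le   : iterm -> iterm -> form
| EqI  : iterm -> iterm -> form
| EqF  : fterm -> fterm -> form
| EqM  : mterm -> mterm -> form
| Not  : form -> form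
| And  : form -> form -> form
| Or   : form -> form -> form
| Imp  : form -> form -> form
| AllI : form -> form
| AllF : form -> form
| AllM : form -> form.

Definition Iff (p q : form) : form := And (Imp p q) (Imp q p).
Definition Lt (s t : iterm) : form := And (Le s t) (Not (EqI s t)).

Fixpoint of_iform (a : iform) : form :=
  match a with
  | QLe s t => Le s t
  | QEq s t => EqI s t
  | QNot p => Not (of_iform p)
  | QAnd p q => And (of_iform p) (of_iform q)
  | QOr p q => Or (of_iform p) (of_iform q)
  end.

Record ren := Ren { rI : nat -> nat; rF : nat -> nat; rM : nat -> nat }.

Definition up0 (f : nat -> nat) (n : nat) : nat :=
  match n with 0 => 0 | S k => S (f k) end.

Definition uprI (x : ren) := Ren (up0 (rI x)) (rF x) (rM x).
Definition uprF (x : ren) := Ren (rI x) (up0 (rF x)) (rM x).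
Definition uprM (x : ren) := Ren (rI x) (rF x) (up0 (rM x)).

Fixpoint ren_i (x : ren) (t : iterm) : iterm :=
  match t with
  | IVar n => IVar (rI x n)
  | IZero => IZero
  | IOne => IOne
  | IAdd a b => IAdd (ren_i x a) (ren_i x b)
  | IMul a b => IMul (ren_i x a) (ren_i x b)
  | IMonus a b => IMonus (ren_i x a) (ren_i x b)
  | IDiv a b => IDiv (ren_i x a) (ren_i x b)
  | IRem a b => IRem (ren_i x a) (ren_i x b)
  | IRows A => IRows (ren_m x A)
  | ICols A => ICols (ren_m x A)
  | ICond q a b => ICond (ren_q x q) (ren_i x a) (ren_i x b)
  end
with ren_f (x : ren) (t : fterm) : fterm :=
  match t with
  | FVar n => FVar (rF x n)
  | FZero => FZero
  | FOne => FOne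
  | FAdd a b => FAdd (ren_f x a) (ren_f x b)
  | FMul a b => FMul (ren_f x a) (ren_f x b)
  | FOpp a => FOpp (ren_f x a)
  | FInv a => FInv (ren_f x a)
  | FEntry A i j => FEntry (ren_m x A) (ren_i x i) (ren_i x j)
  | FSum A => FSum (ren_m x A)
  | FCond q a b => FCond (ren_q x q) (ren_f x a) (ren_f x b)
  end
with ren_m (x : ren) (A : mterm) : mterm :=
  match A with
  | MVar n => MVar (rM x n)
  | MPow k B => MPow (ren_i x k) (ren_m x B)
  | MLam m n t => MLam (ren_i x m) (ren_i x n) (ren_f (uprI (uprI x)) t)
  end
with ren_q (x : ren) (q : iform) : iform :=
  match q with
  | QLe a b => QLe (ren_i x a) (ren_i x b)
  | QEq a b => QEq (ren_i x a) (ren_i x b)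
  | QNot p => QNot (ren_q x p)
  | QAnd p r => QAnd (ren_q x p) (ren_q x r)
  | QOr p r => QOr (ren_q x p) (ren_q x r)
  end.

Definition shI : ren := Ren S (fun n => n) (fun n => n).
Definition shF : ren := Ren (fun n => n) S (fun n => n).
Definition shM : ren := Ren (fun n => n) (fun n => n) S.

Record sub := Sub { sI : nat -> iterm; sF : nat -> fterm; sM : nat -> mterm }.

Definition upsI (s : sub) : sub :=
  Sub (fun n => match n with 0 => IVar 0 | S k => ren_i shI (sI s k) end)
      (fun n => ren_f shI (sF s n)) (fun n => ren_m shI (sM s n)).
Definition upsF (s : sub) : sub :=
  Sub (fun n => ren_i shF (sI s n))
      (fun n => match n with 0 => FVar 0 | S k => ren_f shF (sF s k) end)
      (fun n => ren_m shF (sM s n)).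
Definition upsM (s : sub) : sub :=
  Sub (fun n => ren_i shM (sI s n)) (fun n => ren_f shM (sF s n))
      (fun n => match n with 0 => MVar 0 | S k => ren_m shM (sM s k) end).

Fixpoint sub_i (s : sub) (t : iterm) : iterm :=
  match t with
  | IVar n => sI s n
  | IZero => IZero
  | IOne => IOne
  | IAdd a b => IAdd (sub_i s a) (sub_i s b)
  | IMul a b => IMul (sub_i s a) (sub_i s b)
  | IMonus a b => IMonus (sub_i s a) (sub_i s b)
  | IDiv a b => IDiv (sub_i s a) (sub_i s b)
  | IRem a b => IRem (sub_i s a) (sub_i s b)
  | IRows A => IRows (sub_m s A)
  | ICols A => ICols (sub_m s A)
  | ICond q a b => ICond (sub_q s q) (sub_i s a) (sub_i s b)
  end
with sub_f (s : sub) (t : fterm) : fterm :=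
  match t with
  | FVar n => sF s n
  | FZero => FZero
  | FOne => FOne
  | FAdd a b => FAdd (sub_f s a) (sub_f s b)
  | FMul a b => FMul (sub_f s a) (sub_f s b)
  | FOpp a => FOpp (sub_f s a)
  | FInv a => FInv (sub_f s a)
  | FEntry A i j => FEntry (sub_m s A) (sub_i s i) (sub_i s j)
  | FSum A => FSum (sub_m s A)
  | FCond q a b => FCond (sub_q s q) (sub_f s a) (sub_f s b)
  end
with sub_m (s : sub) (A : mterm) : mterm :=
  match A with
  | MVar n => sM s n
  | MPow k B => MPow (sub_i s k) (sub_m s B)
  | MLam m n t => MLam (sub_i s m) (sub_i s n) (sub_f (upsI (upsI s)) t)
  end
with sub_q (s : sub) (q : iform) : iform :=
  match q with
  | QLe a b => QLe (sub_i s a) (sub_i s b)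
  | QEq a b => QEq (sub_i s a) (sub_i s b)
  | QNot p => QNot (sub_q s p)
  | QAnd p r => QAnd (sub_q s p) (sub_q s r)
  | QOr p r => QOr (sub_q s p) (sub_q s r)
  end.

Fixpoint ren_form (x : ren) (p : form) : form :=
  match p with
  | Le a b => Le (ren_i x a) (ren_i x b)
  | EqI a b => EqI (ren_i x a) (ren_i x b)
  | EqF a b => EqF (ren_f x a) (ren_f x b)
  | EqM a b => EqM (ren_m x a) (ren_m x b)
  | Not q => Not (ren_form x q)
  | And q r => And (ren_form x q) (ren_form x r)
  | Or q r => Or (ren_form x q) (ren_form x r)
  | Imp q r => Imp (ren_form x q) (ren_form x r)
  | AllI q => AllI (ren_form (uprI x) q)
  | AllF q => AllF (ren_form (uprF x) q)
  | AllM q => AllM (ren_form (uprM x) q)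
  end.

Fixpoint sub_form (s : sub) (p : form) : form :=
  match p with
  | Le a b => Le (sub_i s a) (sub_i s b)
  | EqI a b => EqI (sub_i s a) (sub_i s b)
  | EqF a b => EqF (sub_f s a) (sub_f s b)
  | EqM a b => EqM (sub_m s a) (sub_m s b)
  | Not q => Not (sub_form s q)
  | And q r => And (sub_form s q) (sub_form s r)
  | Or q r => Or (sub_form s q) (sub_form s r)
  | Imp q r => Imp (sub_form s q) (sub_form s r)
  | AllI q => AllI (sub_form (upsI s) q)
  | AllF q => AllF (sub_form (upsF s) q)
  | AllM q => AllM (sub_form (upsM s) q)
  end.

Definition instI (t : iterm) : sub :=
  Sub (fun n => match n with 0 => t | S k => IVar k end) FVar MVar.
Definition instF (t : fterm) : sub :=
  Sub IVar (fun n => match n with 0 => t | S k => FVar k end) MVar.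
Definition instM (t : mterm) : sub :=
  Sub IVar FVar (fun n => match n with 0 => t | S k => MVar k end).
Definition succ0 : sub :=
  Sub (fun n => match n with 0 => IAdd (IVar 0) IOne | S k => IVar (S k) end)
      FVar MVar.
Definition inst2 (i j : iterm) : sub :=
  Sub (fun n => match n with 0 => j | 1 => i | S (S k) => IVar k end)
      FVar MVar.

Inductive srt := SI | SF | SM.

Definition bump (b s : srt) (n : nat) : nat :=
  match b, s with
  | SI, SI | SF, SF | SM, SM => S n
  | _, _ => n
  end.

Fixpoint occ_i (s : srt) (n : nat) (t : iterm) : bool :=
  match t with
  | IVar k => match s with SI => Nat.eqb k n | _ => false end
  | IZero | IOne => false
  | IAdd a b | IMul a b | IMonus a b | IDiv a b | IRem a b =>
      occ_i s n a || occ_i s n b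
  | IRows A | ICols A => occ_m s n A
  | ICond q a b => occ_q s n q || occ_i s n a || occ_i s n b
  end
with occ_f (s : srt) (n : nat) (t : fterm) : bool :=
  match t with
  | FVar k => match s with SF => Nat.eqb k n | _ => false end
  | FZero | FOne => false
  | FAdd a b | FMul a b => occ_f s n a || occ_f s n b
  | FOpp a | FInv a => occ_f s n a
  | FEntry A i j => occ_m s n A || occ_i s n i || occ_i s n j
  | FSum A => occ_m s n A
  | FCond q a b => occ_q s n q || occ_f s n a || occ_f s n b
  end
with occ_m (s : srt) (n : nat) (A : mterm) : bool :=
  match A with
  | MVar k => match s with SM => Nat.eqb k n | _ => false end
  | MPow k B => occ_i s n k || occ_m s n B
  | MLam m k t => occ_i s n m || occ_i s n k || occ_f s (bump SI s (bump SI s n)) t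
  end
with occ_q (s : srt) (n : nat) (q : iform) : bool :=
  match q with
  | QLe a b | QEq a b => occ_i s n a || occ_i s n b
  | QNot p => occ_q s n p
  | QAnd p r | QOr p r => occ_q s n p || occ_q s n r
  end.

Fixpoint occ_form (s : srt) (n : nat) (p : form) : bool :=
  match p with
  | Le a b | EqI a b => occ_i s n a || occ_i s n b
  | EqF a b => occ_f s n a || occ_f s n b
  | EqM a b => occ_m s n a || occ_m s n b
  | Not q => occ_form s n q
  | And q r | Or q r | Imp q r => occ_form s n q || occ_form s n r
  | AllI q => occ_form s (bump SI s n) q
  | AllF q => occ_form s (bump SF s n) q
  | AllM q => occ_form s (bump SM s n) q
  end.

Fixpoint is_open (p : form) : bool :=
  match p with
  | Le _ _ | EqI _ _ | EqF _ _ | EqM _ _ => true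
  | Not q => is_open q
  | And q r | Or q r | Imp q r => is_open q && is_open r
  | AllI _ | AllF _ | AllM _ => false
  end.

(* bounded index quantifier  (forall i <= t) p ;  t is written in the outer
   context (so i does not occur in t), p has i as index variable 0 *)
Definition AllLe (t : iterm) (p : form) : form :=
  AllI (Imp (Le (IVar 0) (ren_i shI t)) p).
Definition ExLe (t : iterm) (p : form) : form :=
  Not (AllLe t (Not p)).

Inductive SigmaB0 : form -> Prop :=
| SB_Le  : forall a b, SigmaB0 (Le a b)
| SB_EqI : forall a b, SigmaB0 (EqI a b)
| SB_EqF : forall a b, SigmaB0 (EqF a b)
| SB_EqM : forall a b, SigmaB0 (EqM a b)
| SB_Not : forall p, SigmaB0 p -> SigmaB0 (Not p)
| SB_And : forall p q, SigmaB0 p -> SigmaB0 q -> SigmaB0 (And p q)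
| SB_Or  : forall p q, SigmaB0 p -> SigmaB0 q -> SigmaB0 (Or p q)
| SB_Imp : forall p q, SigmaB0 p -> SigmaB0 q -> SigmaB0 (Imp p q)
| SB_AllLe : forall t p, SigmaB0 p -> SigmaB0 (AllLe t p)
| SB_ExLe  : forall t p, SigmaB0 p -> SigmaB0 (ExLe t p).

Definition sh2i (t : iterm) := ren_i shI (ren_i shI t).
Definition sh2m (A : mterm) := ren_m shI (ren_m shI A).
Definition i2 : iterm := IVar 1.
Definition j2 : iterm := IVar 0.
Definition ITwo := IAdd IOne IOne.

Definition MId (n : iterm) : mterm :=
  MLam n n (FCond (QEq i2 j2) FOne FZero).
Definition MTr (A : mterm) : mterm :=
  MLam (ICols A) (IRows A) (FEntry (sh2m A) j2 i2).
(* matrix product:  (A*B)_{ij} = Sigma( lambda p q <c(A),1, e(A,i,p) e(B,p,j)> ) *)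
Definition MMul (A B : mterm) : mterm :=
  MLam (IRows A) (ICols B)
    (FSum (MLam (ICols (sh2m A)) IOne
       (FMul (FEntry (sh2m (sh2m A)) (IVar 3) (IVar 1))
             (FEntry (sh2m (sh2m B)) (IVar 1) (IVar 2))))).
(* first row without its first entry, first column without its first entry,
   and the minor obtained by deleting the first row and column *)
Definition MR (A : mterm) : mterm :=
  MLam IOne (IMonus (ICols A) IOne) (FEntry (sh2m A) IOne (IAdd j2 IOne)).
Definition MS (A : mterm) : mterm :=
  MLam (IMonus (IRows A) IOne) IOne (FEntry (sh2m A) (IAdd i2 IOne) IOne).
Definition MM (A : mterm) : mterm :=
  MLam (IMonus (IRows A) IOne) (IMonus (ICols A) IOne)
       (FEntry (sh2m A) (IAdd i2 IOne) (IAdd j2 IOne)).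

Inductive LAPax : form -> Prop :=
(* index sort: nonnegative part of a discretely ordered ring *)
| AxIAddC : forall s t, LAPax (EqI (IAdd s t) (IAdd t s))
| AxIAddA : forall s t u, LAPax (EqI (IAdd (IAdd s t) u) (IAdd s (IAdd t u)))
| AxIAdd0 : forall s, LAPax (EqI (IAdd s IZero) s)
| AxIMulC : forall s t, LAPax (EqI (IMul s t) (IMul t s))
| AxIMulA : forall s t u, LAPax (EqI (IMul (IMul s t) u) (IMul s (IMul t u)))
| AxIMul1 : forall s, LAPax (EqI (IMul s IOne) s)
| AxIMul0 : forall s, LAPax (EqI (IMul s IZero) IZero)
| AxIDist : forall s t u, LAPax (EqI (IMul s (IAdd t u)) (IAdd (IMul s t) (IMul s u)))
| AxLeRefl : forall s, LAPax (Le s s)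
| AxLeTrans : forall s t u, LAPax (Imp (And (Le s t) (Le t u)) (Le s u))
| AxLeAnti : forall s t, LAPax (Imp (And (Le s t) (Le t s)) (EqI s t))
| AxLeTotal : forall s t, LAPax (Or (Le s t) (Le t s))
| AxLeAdd : forall s t u, LAPax (Imp (Lt s t) (Lt (IAdd s u) (IAdd t u)))
| AxLeMul : forall s t u,
    LAPax (Imp (And (Lt s t) (Lt IZero u)) (Lt (IMul s u) (IMul t u)))
| AxLe0 : forall s, LAPax (Le IZero s)
| AxZeroLtOne : LAPax (Lt IZero IOne)
| AxDiscr : forall s t, LAPax (Imp (Lt s t) (Le (IAdd s IOne) t))
| AxMonus1 : forall s t, LAPax (Imp (Le s t) (EqI (IAdd (IMonus t s) s) t))
| AxMonus2 : forall s t, LAPax (Imp (Le t s) (EqI (IMonus t s) IZero))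
| AxDivRem : forall s t,
    LAPax (Imp (Not (EqI t IZero))
             (And (EqI s (IAdd (IMul t (IDiv s t)) (IRem s t)))
                  (Lt (IRem s t) t)))
(* open induction on the index sort (induction variable = index var 0) *)
| AxInd : forall p, is_open p = true ->
    LAPax (Imp (And (sub_form (instI IZero) p)
                    (AllI (Imp p (sub_form succ0 p))))
               (AllI p))
| AxFAddC : forall a b, LAPax (EqF (FAdd a b) (FAdd b a))
| AxFAddA : forall a b c, LAPax (EqF (FAdd (FAdd a b) c) (FAdd a (FAdd b c)))
| AxFAdd0 : forall a, LAPax (EqF (FAdd a FZero) a)
| AxFOpp  : forall a, LAPax (EqF (FAdd a (FOpp a)) FZero)
| AxFMulC : forall a b, LAPax (EqF (FMul a b) (FMul b a))
| AxFMulA : forall a b c, LAPax (EqF (FMul (FMul a b) c) (FMul a (FMul b c)))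
| AxFMul1 : forall a, LAPax (EqF (FMul a FOne) a)
| AxFDist : forall a b c, LAPax (EqF (FMul a (FAdd b c)) (FAdd (FMul a b) (FMul a c)))
| AxF01 : LAPax (Not (EqF FZero FOne))
| AxFInv : forall a, LAPax (Imp (Not (EqF a FZero)) (EqF (FMul a (FInv a)) FOne))
| AxICond1 : forall q s t, LAPax (Imp (of_iform q) (EqI (ICond q s t) s))
| AxICond2 : forall q s t, LAPax (Imp (Not (of_iform q)) (EqI (ICond q s t) t))
| AxFCond1 : forall q a b, LAPax (Imp (of_iform q) (EqF (FCond q a b) a))
| AxFCond2 : forall q a b, LAPax (Imp (Not (of_iform q)) (EqF (FCond q a b) b))
| AxLamR : forall m n t, LAPax (EqI (IRows (MLam m n t)) m)
| AxLamC : forall m n t, LAPax (EqI (ICols (MLam m n t)) n)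
| AxLamE : forall m n t i j,
    LAPax (Imp (And (And (Le IOne i) (Le i m)) (And (Le IOne j) (Le j n)))
               (EqF (FEntry (MLam m n t) i j) (sub_f (inst2 i j) t)))
| AxEntry0 : forall A i j,
    LAPax (Imp (Or (Or (EqI i IZero) (Lt (IRows A) i))
                   (Or (EqI j IZero) (Lt (ICols A) j)))
               (EqF (FEntry A i j) FZero))
| AxExt : forall A B,
    LAPax (Imp (And (And (EqI (IRows A) (IRows B)) (EqI (ICols A) (ICols B)))
                    (AllLe (IRows A) (AllLe (ren_i shI (ICols A))
                       (EqF (FEntry (sh2m A) i2 j2) (FEntry (sh2m B) i2 j2)))))
               (EqM A B))
| AxSum0 : forall A,
    LAPax (Imp (Or (EqI (IRows A) IZero) (EqI (ICols A) IZero)) (EqF (FSum A) FZero))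
| AxSum1 : forall A,
    LAPax (Imp (And (EqI (IRows A) IOne) (EqI (ICols A) IOne))
               (EqF (FSum A) (FEntry A IOne IOne)))
| AxSumRow : forall A,
    LAPax (Imp (And (EqI (IRows A) IOne) (Lt IOne (ICols A)))
               (EqF (FSum A)
                    (FAdd (FSum (MLam IOne (IMonus (ICols A) IOne)
                                      (FEntry (sh2m A) i2 j2)))
                          (FEntry A IOne (ICols A)))))
| AxSumCol : forall A,
    LAPax (Imp (EqI (ICols A) IOne) (EqF (FSum A) (FSum (MTr A))))
| AxSumRec : forall A,
    LAPax (Imp (And (Lt IOne (IRows A)) (Lt IOne (ICols A)))
               (EqF (FSum A)
                    (FAdd (FAdd (FAdd (FEntry A IOne IOne) (FSum (MR A)))
                                (FSum (MS A)))
                          (FSum (MM A)))))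
| AxPow0 : forall A,
    LAPax (Imp (EqI (IRows A) (ICols A)) (EqM (MPow IZero A) (MId (IRows A))))
| AxPowS : forall k A,
    LAPax (Imp (EqI (IRows A) (ICols A))
               (EqM (MPow (IAdd k IOne) A) (MMul (MPow k A) A))).

(* truth value of a formula under an assignment of booleans to its
   prime (atomic or universally quantified) subformulas *)
Fixpoint tv (v : form -> bool) (p : form) : bool :=
  match p with
  | Not q => negb (tv v q)
  | And q r => tv v q && tv v r
  | Or q r => tv v q || tv v r
  | Imp q r => implb (tv v q) (tv v r)
  | _ => v p
  end.

Definition tautology (p : form) : Prop := forall v, tv v p = true.

Inductive LAP_proves : form -> Prop :=
| Pr_ax : forall p, LAPax p -> LAP_proves p
| Pr_taut : forall p, tautology p -> LAP_proves p
| Pr_mp : forall p q, LAP_proves (Imp p q) -> LAP_proves p -> LAP_proves q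
| Pr_instI : forall p t, LAP_proves (Imp (AllI p) (sub_form (instI t) p))
| Pr_instF : forall p t, LAP_proves (Imp (AllF p) (sub_form (instF t) p))
| Pr_instM : forall p t, LAP_proves (Imp (AllM p) (sub_form (instM t) p))
(* generalization: from  q -> p  with x not free in q, infer  q -> forall x p *)
| Pr_genI : forall q p, LAP_proves (Imp (ren_form shI q) p) -> LAP_proves (Imp q (AllI p))
| Pr_genF : forall q p, LAP_proves (Imp (ren_form shF q) p) -> LAP_proves (Imp q (AllF p))
| Pr_genM : forall q p, LAP_proves (Imp (ren_form shM q) p) -> LAP_proves (Imp q (AllM p))
| Pr_reflI : forall t, LAP_proves (EqI t t)
| Pr_reflF : forall t, LAP_proves (EqF t t)
| Pr_reflM : forall t, LAP_proves (EqM t t)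
| Pr_leibI : forall s t p,
    LAP_proves (Imp (EqI s t) (Imp (sub_form (instI s) p) (sub_form (instI t) p)))
| Pr_leibF : forall s t p,
    LAP_proves (Imp (EqF s t) (Imp (sub_form (instF s) p) (sub_form (instF t) p)))
| Pr_leibM : forall s t p,
    LAP_proves (Imp (EqM s t) (Imp (sub_form (instM s) p) (sub_form (instM t) p))).

Definition fv_sub (d : fterm) (p : form) : Prop :=
  forall s n, occ_f s n d = true -> occ_form s n p = true.

(* Main.v *)
Require Import Defs.
From Stdlib Require Import Bool Arith Lia FunctionalExtensionality.

Scheme iterm_ind' := Induction for iterm Sort Prop
with fterm_ind' := Induction for fterm Sort Prop
with mterm_ind' := Induction for mterm Sort Prop
with iform_ind' := Induction for iform Sort Prop.
Combined Scheme syn_ind from iterm_ind', fterm_ind', mterm_ind', iform_ind'.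

Definition rcomp (x y : ren) : ren :=
  Ren (fun n => rI y (rI x n)) (fun n => rF y (rF x n)) (fun n => rM y (rM x n)).
Definition srcomp (x : ren) (s : sub) : sub :=
  Sub (fun n => sI s (rI x n)) (fun n => sF s (rF x n)) (fun n => sM s (rM x n)).
Definition rscomp (s : sub) (x : ren) : sub :=
  Sub (fun n => ren_i x (sI s n)) (fun n => ren_f x (sF s n)) (fun n => ren_m x (sM s n)).
Definition sscomp (s t : sub) : sub :=
  Sub (fun n => sub_i t (sI s n)) (fun n => sub_f t (sF s n)) (fun n => sub_m t (sM s n)).
Definition ids : sub := Sub IVar FVar MVar.

Lemma up0_comp f g : (fun n => up0 g (up0 f n)) = up0 (fun n => g (f n)).
Proof. apply functional_extensionality; intros [|n]; reflexivity. Qed.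

Lemma rcomp_upI x y : rcomp (uprI x) (uprI y) = uprI (rcomp x y).
Proof. unfold rcomp, uprI; simpl; rewrite up0_comp; reflexivity. Qed.
Lemma rcomp_upF x y : rcomp (uprF x) (uprF y) = uprF (rcomp x y).
Proof. unfold rcomp, uprF; simpl; rewrite up0_comp; reflexivity. Qed.
Lemma rcomp_upM x y : rcomp (uprM x) (uprM y) = uprM (rcomp x y).
Proof. unfold rcomp, uprM; simpl; rewrite up0_comp; reflexivity. Qed.

Lemma ren_ren_syn :
  (forall t x y, ren_i y (ren_i x t) = ren_i (rcomp x y) t) /\
  (forall t x y, ren_f y (ren_f x t) = ren_f (rcomp x y) t) /\
  (forall t x y, ren_m y (ren_m x t) = ren_m (rcomp x y) t) /\
  (forall t x y, ren_q y (ren_q x t) = ren_q (rcomp x y) t).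
Proof.
  apply syn_ind; intros; simpl; try reflexivity;
  repeat match goal with H : forall _ _, _ = _ |- _ => rewrite H; clear H end;
  try reflexivity.
  rewrite !rcomp_upI; reflexivity.
Qed.

Lemma ren_ren_form : forall p x y, ren_form y (ren_form x p) = ren_form (rcomp x y) p.
Proof.
  destruct ren_ren_syn as (Hi & Hf & Hm & _).
  induction p; intros; simpl; rewrite ?Hi, ?Hf, ?Hm, ?IHp, ?IHp1, ?IHp2; try reflexivity.
  - rewrite rcomp_upI; reflexivity.
  - rewrite rcomp_upF; reflexivity.
  - rewrite rcomp_upM; reflexivity.
Qed.

Lemma srcomp_upI x s : srcomp (uprI x) (upsI s) = upsI (srcomp x s).
Proof.
  unfold srcomp, upsI, uprI; simpl; f_equal; apply functional_extensionality; intros [|n]; reflexivity.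
Qed.
Lemma srcomp_upF x s : srcomp (uprF x) (upsF s) = upsF (srcomp x s).
Proof.
  unfold srcomp, upsF, uprF; simpl; f_equal; apply functional_extensionality; intros [|n]; reflexivity.
Qed.
Lemma srcomp_upM x s : srcomp (uprM x) (upsM s) = upsM (srcomp x s).
Proof.
  unfold srcomp, upsM, uprM; simpl; f_equal; apply functional_extensionality; intros [|n]; reflexivity.
Qed.

Lemma sub_ren_syn :
  (forall t x s, sub_i s (ren_i x t) = sub_i (srcomp x s) t) /\
  (forall t x s, sub_f s (ren_f x t) = sub_f (srcomp x s) t) /\
  (forall t x s, sub_m s (ren_m x t) = sub_m (srcomp x s) t) /\
  (forall t x s, sub_q s (ren_q x t) = sub_q (srcomp x s) t).
Proof.
  apply syn_ind; intros; simpl; try reflexivity;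
  repeat match goal with H : forall _ _, _ = _ |- _ => rewrite H; clear H end;
  try reflexivity.
  rewrite !srcomp_upI; reflexivity.
Qed.

Lemma sub_ren_form : forall p x s, sub_form s (ren_form x p) = sub_form (srcomp x s) p.
Proof.
  destruct sub_ren_syn as (Hi & Hf & Hm & _).
  induction p; intros; simpl; rewrite ?Hi, ?Hf, ?Hm, ?IHp, ?IHp1, ?IHp2; try reflexivity.
  - rewrite srcomp_upI; reflexivity.
  - rewrite srcomp_upF; reflexivity.
  - rewrite srcomp_upM; reflexivity.
Qed.

Lemma rscomp_upI s x : rscomp (upsI s) (uprI x) = upsI (rscomp s x).
Proof.
  destruct ren_ren_syn as (Hi & Hf & Hm & _).
  unfold rscomp, upsI, uprI; simpl; f_equal; apply functional_extensionality; try intros [|n]; intros;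
  simpl; rewrite ?Hi, ?Hf, ?Hm; try reflexivity.
Qed.
Lemma rscomp_upF s x : rscomp (upsF s) (uprF x) = upsF (rscomp s x).
Proof.
  destruct ren_ren_syn as (Hi & Hf & Hm & _).
  unfold rscomp, upsF, uprF; simpl; f_equal; apply functional_extensionality; try intros [|n]; intros;
  simpl; rewrite ?Hi, ?Hf, ?Hm; try reflexivity.
Qed.
Lemma rscomp_upM s x : rscomp (upsM s) (uprM x) = upsM (rscomp s x).
Proof.
  destruct ren_ren_syn as (Hi & Hf & Hm & _).
  unfold rscomp, upsM, uprM; simpl; f_equal; apply functional_extensionality; try intros [|n]; intros;
  simpl; rewrite ?Hi, ?Hf, ?Hm; try reflexivity.
Qed.

Lemma ren_sub_syn :
  (forall t s x, ren_i x (sub_i s t) = sub_i (rscomp s x) t) /\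
  (forall t s x, ren_f x (sub_f s t) = sub_f (rscomp s x) t) /\
  (forall t s x, ren_m x (sub_m s t) = sub_m (rscomp s x) t) /\
  (forall t s x, ren_q x (sub_q s t) = sub_q (rscomp s x) t).
Proof.
  apply syn_ind; intros; simpl; try reflexivity;
  repeat match goal with H : forall _ _, _ = _ |- _ => rewrite H; clear H end;
  try reflexivity.
  rewrite !rscomp_upI; reflexivity.
Qed.

Lemma ren_sub_form : forall p s x, ren_form x (sub_form s p) = sub_form (rscomp s x) p.
Proof.
  destruct ren_sub_syn as (Hi & Hf & Hm & _).
  induction p; intros; simpl; rewrite ?Hi, ?Hf, ?Hm, ?IHp, ?IHp1, ?IHp2; try reflexivity.
  - rewrite rscomp_upI; reflexivity.
  - rewrite rscomp_upF; reflexivity.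
  - rewrite rscomp_upM; reflexivity.
Qed.

Lemma sscomp_upI s t : sscomp (upsI s) (upsI t) = upsI (sscomp s t).
Proof.
  destruct ren_sub_syn as (Hi & Hf & Hm & _).
  destruct sub_ren_syn as (Hi' & Hf' & Hm' & _).
  unfold sscomp, upsI; simpl; f_equal; apply functional_extensionality; try intros [|n]; intros;
  simpl; rewrite ?Hi, ?Hf, ?Hm, ?Hi', ?Hf', ?Hm'; try reflexivity.
Qed.
Lemma sscomp_upF s t : sscomp (upsF s) (upsF t) = upsF (sscomp s t).
Proof.
  destruct ren_sub_syn as (Hi & Hf & Hm & _).
  destruct sub_ren_syn as (Hi' & Hf' & Hm' & _).
  unfold sscomp, upsF; simpl; f_equal; apply functional_extensionality; try intros [|n]; intros;
  simpl; rewrite ?Hi, ?Hf, ?Hm, ?Hi', ?Hf', ?Hm'; try reflexivity.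
Qed.
Lemma sscomp_upM s t : sscomp (upsM s) (upsM t) = upsM (sscomp s t).
Proof.
  destruct ren_sub_syn as (Hi & Hf & Hm & _).
  destruct sub_ren_syn as (Hi' & Hf' & Hm' & _).
  unfold sscomp, upsM; simpl; f_equal; apply functional_extensionality; try intros [|n]; intros;
  simpl; rewrite ?Hi, ?Hf, ?Hm, ?Hi', ?Hf', ?Hm'; try reflexivity.
Qed.

Lemma sub_sub_syn :
  (forall u s t, sub_i t (sub_i s u) = sub_i (sscomp s t) u) /\
  (forall u s t, sub_f t (sub_f s u) = sub_f (sscomp s t) u) /\
  (forall u s t, sub_m t (sub_m s u) = sub_m (sscomp s t) u) /\
  (forall u s t, sub_q t (sub_q s u) = sub_q (sscomp s t) u).
Proof.
  apply syn_ind; intros; simpl; try reflexivity;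
  repeat match goal with H : forall _ _, _ = _ |- _ => rewrite H; clear H end;
  try reflexivity.
  rewrite !sscomp_upI; reflexivity.
Qed.

Lemma sub_sub_form : forall p s t, sub_form t (sub_form s p) = sub_form (sscomp s t) p.
Proof.
  destruct sub_sub_syn as (Hi & Hf & Hm & _).
  induction p; intros; simpl; rewrite ?Hi, ?Hf, ?Hm, ?IHp, ?IHp1, ?IHp2; try reflexivity.
  - rewrite sscomp_upI; reflexivity.
  - rewrite sscomp_upF; reflexivity.
  - rewrite sscomp_upM; reflexivity.
Qed.

Lemma ups_idsI : upsI ids = ids.
Proof. unfold upsI, ids; simpl; f_equal; apply functional_extensionality; intros [|n]; reflexivity. Qed.
Lemma ups_idsF : upsF ids = ids.
Proof. unfold upsF, ids; simpl; f_equal; apply functional_extensionality; intros [|n]; reflexivity. Qed.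
Lemma ups_idsM : upsM ids = ids.
Proof. unfold upsM, ids; simpl; f_equal; apply functional_extensionality; intros [|n]; reflexivity. Qed.

Lemma sub_id_syn :
  (forall u, sub_i ids u = u) /\ (forall u, sub_f ids u = u) /\
  (forall u, sub_m ids u = u) /\ (forall u, sub_q ids u = u).
Proof.
  apply syn_ind; intros; simpl; try reflexivity;
  repeat match goal with H : _ = _ |- _ => rewrite H; clear H end;
  try reflexivity.
  rewrite !ups_idsI; congruence.
Qed.

Lemma sub_id_form : forall p, sub_form ids p = p.
Proof.
  destruct sub_id_syn as (Hi & Hf & Hm & _).
  induction p; simpl; rewrite ?Hi, ?Hf, ?Hm, ?IHp, ?IHp1, ?IHp2;
  rewrite ?ups_idsI, ?ups_idsF, ?ups_idsM, ?IHp; reflexivity.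
Qed.

Definition ren2sub (x : ren) : sub :=
  Sub (fun n => IVar (rI x n)) (fun n => FVar (rF x n)) (fun n => MVar (rM x n)).

Lemma ren_as_sub_syn :
  (forall u x, ren_i x u = sub_i (ren2sub x) u) /\ (forall u x, ren_f x u = sub_f (ren2sub x) u) /\
  (forall u x, ren_m x u = sub_m (ren2sub x) u) /\ (forall u x, ren_q x u = sub_q (ren2sub x) u).
Proof.
  apply syn_ind; intros; simpl; try reflexivity;
  repeat match goal with H : forall _, _ = _ |- _ => rewrite H; clear H end;
  try reflexivity.
  f_equal. f_equal. unfold ren2sub, upsI, uprI; simpl. f_equal; apply functional_extensionality;
  intros [|[|n]]; reflexivity.
Qed.

Lemma sub_ren_gen_i x s u : sub_i s (ren_i x u) = sub_i (srcomp x s) u.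
Proof. apply sub_ren_syn. Qed.
Lemma sub_ren_gen_f x s u : sub_f s (ren_f x u) = sub_f (srcomp x s) u.
Proof. apply sub_ren_syn. Qed.
Lemma sub_ren_gen_m x s u : sub_m s (ren_m x u) = sub_m (srcomp x s) u.
Proof. apply sub_ren_syn. Qed.
Lemma sub_ren_gen_q x s u : sub_q s (ren_q x u) = sub_q (srcomp x s) u.
Proof. apply sub_ren_syn. Qed.

Lemma srcomp_instI s : srcomp shI (instI s) = ids.
Proof. reflexivity. Qed.
Lemma srcomp_instF s : srcomp shF (instF s) = ids.
Proof. reflexivity. Qed.
Lemma srcomp_instM s : srcomp shM (instM s) = ids.
Proof. reflexivity. Qed.

Lemma sub_instI_i s u : sub_i (instI s) (ren_i shI u) = u.
Proof. rewrite sub_ren_gen_i, srcomp_instI; apply sub_id_syn. Qed.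
Lemma sub_instI_f s u : sub_f (instI s) (ren_f shI u) = u.
Proof. rewrite sub_ren_gen_f, srcomp_instI; apply sub_id_syn. Qed.
Lemma sub_instI_m s u : sub_m (instI s) (ren_m shI u) = u.
Proof. rewrite sub_ren_gen_m, srcomp_instI; apply sub_id_syn. Qed.
Lemma sub_instI_q s u : sub_q (instI s) (ren_q shI u) = u.
Proof. rewrite sub_ren_gen_q, srcomp_instI; apply sub_id_syn. Qed.
Lemma sub_instI_form s u : sub_form (instI s) (ren_form shI u) = u.
Proof. rewrite sub_ren_form, srcomp_instI; apply sub_id_form. Qed.
Lemma sub_instF_i s u : sub_i (instF s) (ren_i shF u) = u.
Proof. rewrite sub_ren_gen_i, srcomp_instF; apply sub_id_syn. Qed.
Lemma sub_instF_f s u : sub_f (instF s) (ren_f shF u) = u.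
Proof. rewrite sub_ren_gen_f, srcomp_instF; apply sub_id_syn. Qed.
Lemma sub_instF_m s u : sub_m (instF s) (ren_m shF u) = u.
Proof. rewrite sub_ren_gen_m, srcomp_instF; apply sub_id_syn. Qed.
Lemma sub_instF_form s u : sub_form (instF s) (ren_form shF u) = u.
Proof. rewrite sub_ren_form, srcomp_instF; apply sub_id_form. Qed.
Lemma sub_instM_i s u : sub_i (instM s) (ren_i shM u) = u.
Proof. rewrite sub_ren_gen_i, srcomp_instM; apply sub_id_syn. Qed.
Lemma sub_instM_f s u : sub_f (instM s) (ren_f shM u) = u.
Proof. rewrite sub_ren_gen_f, srcomp_instM; apply sub_id_syn. Qed.
Lemma sub_instM_m s u : sub_m (instM s) (ren_m shM u) = u.
Proof. rewrite sub_ren_gen_m, srcomp_instM; apply sub_id_syn. Qed.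
Lemma sub_instM_form s u : sub_form (instM s) (ren_form shM u) = u.
Proof. rewrite sub_ren_form, srcomp_instM; apply sub_id_form. Qed.

Lemma srcomp_inst2 a b : srcomp shI (srcomp shI (inst2 a b)) = ids.
Proof. reflexivity. Qed.
Lemma sub_inst2_i a b u : sub_i (inst2 a b) (ren_i shI (ren_i shI u)) = u.
Proof. rewrite !sub_ren_gen_i, srcomp_inst2; apply sub_id_syn. Qed.
Lemma sub_inst2_f a b u : sub_f (inst2 a b) (ren_f shI (ren_f shI u)) = u.
Proof. rewrite !sub_ren_gen_f, srcomp_inst2; apply sub_id_syn. Qed.
Lemma sub_inst2_m a b u : sub_m (inst2 a b) (ren_m shI (ren_m shI u)) = u.
Proof. rewrite !sub_ren_gen_m, srcomp_inst2; apply sub_id_syn. Qed.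

Lemma srcomp_shI_ups s : srcomp shI (upsI s) = rscomp s shI.
Proof. reflexivity. Qed.
Lemma sub_upsI_i s u : sub_i (upsI s) (ren_i shI u) = ren_i shI (sub_i s u).
Proof. rewrite sub_ren_gen_i, srcomp_shI_ups. symmetry; apply ren_sub_syn. Qed.
Lemma sub_upsI_f s u : sub_f (upsI s) (ren_f shI u) = ren_f shI (sub_f s u).
Proof. rewrite sub_ren_gen_f, srcomp_shI_ups. symmetry; apply ren_sub_syn. Qed.
Lemma sub_upsI_m s u : sub_m (upsI s) (ren_m shI u) = ren_m shI (sub_m s u).
Proof. rewrite sub_ren_gen_m, srcomp_shI_ups. symmetry; apply ren_sub_syn. Qed.
Lemma sub_upsI_q s u : sub_q (upsI s) (ren_q shI u) = ren_q shI (sub_q s u).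
Proof. rewrite sub_ren_gen_q, srcomp_shI_ups. symmetry; apply ren_sub_syn. Qed.
Lemma sub_upsI_form s u : sub_form (upsI s) (ren_form shI u) = ren_form shI (sub_form s u).
Proof. rewrite sub_ren_form, srcomp_shI_ups. symmetry; apply ren_sub_form. Qed.

Lemma srcomp_succ0 : srcomp shI succ0 = ren2sub shI.
Proof. reflexivity. Qed.
Lemma sub_succ0_i u : sub_i succ0 (ren_i shI u) = ren_i shI u.
Proof. rewrite sub_ren_gen_i, srcomp_succ0. symmetry; apply ren_as_sub_syn. Qed.
Lemma sub_succ0_f u : sub_f succ0 (ren_f shI u) = ren_f shI u.
Proof. rewrite sub_ren_gen_f, srcomp_succ0. symmetry; apply ren_as_sub_syn. Qed.
Lemma sub_succ0_m u : sub_m succ0 (ren_m shI u) = ren_m shI u.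
Proof. rewrite sub_ren_gen_m, srcomp_succ0. symmetry; apply ren_as_sub_syn. Qed.
Lemma sub_succ0_q u : sub_q succ0 (ren_q shI u) = ren_q shI u.
Proof. rewrite sub_ren_gen_q, srcomp_succ0. symmetry; apply ren_as_sub_syn. Qed.

Hint Rewrite sub_instI_i sub_instI_f sub_instI_m sub_instI_q sub_instI_form
  sub_instF_i sub_instF_f sub_instF_m sub_instF_form
  sub_instM_i sub_instM_f sub_instM_m sub_instM_form
  sub_inst2_i sub_inst2_f sub_inst2_m
  sub_upsI_i sub_upsI_f sub_upsI_m sub_upsI_q sub_upsI_form
  sub_succ0_i sub_succ0_f sub_succ0_m sub_succ0_q : ssimpl.

Ltac ssimpl := simpl; autorewrite with ssimpl; simpl.
Ltac ssimpl_in H := simpl in H; autorewrite with ssimpl in H; simpl in H.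

Definition PV (H p : form) : Prop := LAP_proves (Imp H p).

Ltac taut := let v := fresh "v" in intro v; simpl;
  repeat match goal with
         | |- context [tv v ?p] => destruct (tv v p)
         | |- context [v ?p] => destruct (v p)
         end; reflexivity.

Lemma pv_of H p : LAP_proves p -> PV H p.
Proof.
  intro Hp. eapply Pr_mp; [|exact Hp]. apply Pr_taut. taut.
Qed.

Lemma pv_t1 H a b : tautology (Imp a b) -> PV H a -> PV H b.
Proof.
  intros T Ha. eapply Pr_mp; [|exact Ha]. apply Pr_taut. intro v. specialize (T v).
  simpl in *. destruct (tv v H), (tv v a), (tv v b); simpl in *; congruence.
Qed.

Lemma pv_t2 H a b c : tautology (Imp a (Imp b c)) -> PV H a -> PV H b -> PV H c.
Proof.
  intros T Ha Hb. eapply Pr_mp; [|exact Hb]. eapply Pr_mp; [|exact Ha].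
  apply Pr_taut. intro v. specialize (T v).
  simpl in *. destruct (tv v H), (tv v a), (tv v b), (tv v c); simpl in *; congruence.
Qed.

Lemma pv_t3 H a b c d : tautology (Imp a (Imp b (Imp c d))) -> PV H a -> PV H b -> PV H c -> PV H d.
Proof.
  intros T Ha Hb Hc. eapply Pr_mp; [|exact Hc]. eapply Pr_mp; [|exact Hb]. eapply Pr_mp; [|exact Ha].
  apply Pr_taut. intro v. specialize (T v).
  simpl in *. destruct (tv v H), (tv v a), (tv v b), (tv v c), (tv v d); simpl in *; congruence.
Qed.

Lemma pv_mp H a b : PV H (Imp a b) -> PV H a -> PV H b.
Proof. apply pv_t2. taut. Qed.

Lemma pv_and H a b : PV H a -> PV H b -> PV H (And a b).
Proof. apply pv_t2. taut. Qed.
Lemma pv_andl H a b : PV H (And a b) -> PV H a.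
Proof. apply pv_t1. taut. Qed.
Lemma pv_andr H a b : PV H (And a b) -> PV H b.
Proof. apply pv_t1. taut. Qed.
Lemma pv_orl H a b : PV H a -> PV H (Or a b).
Proof. apply pv_t1. taut. Qed.
Lemma pv_orr H a b : PV H b -> PV H (Or a b).
Proof. apply pv_t1. taut. Qed.

Lemma pv_intro H a b : PV (And H a) b -> PV H (Imp a b).
Proof.
  intro P. eapply Pr_mp; [|exact P]. apply Pr_taut. taut.
Qed.
Lemma pv_elim H a b : PV H (Imp a b) -> PV (And H a) b.
Proof.
  intro P. eapply Pr_mp; [|exact P]. apply Pr_taut. taut.
Qed.
Lemma pv_hyp H a : PV (And H a) a.
Proof. apply Pr_taut. taut. Qed.
Lemma pv_id H : PV H H.
Proof. apply Pr_taut. taut. Qed.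
Lemma pv_weak H a b : PV H b -> PV (And H a) b.
Proof. intro P. eapply Pr_mp; [|exact P]. apply Pr_taut. taut. Qed.

Lemma pv_cut H a b : PV H a -> PV (And H a) b -> PV H b.
Proof. intros Pa Pb. apply pv_intro in Pb. eapply pv_mp; eauto. Qed.

Lemma pv_cases H a b : PV (And H a) b -> PV (And H (Not a)) b -> PV H b.
Proof.
  intros P1 P2. apply pv_intro in P1. apply pv_intro in P2.
  eapply pv_t2; [|exact P1|exact P2]. taut.
Qed.

Lemma pv_or_elim H a b c : PV H (Or a b) -> PV (And H a) c -> PV (And H b) c -> PV H c.
Proof.
  intros P0 P1 P2. apply pv_intro in P1. apply pv_intro in P2.
  eapply pv_t3; [|exact P0|exact P1|exact P2]. taut.
Qed.

Lemma pv_contra H a b : PV H a -> PV H (Not a) -> PV H b.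
Proof. apply pv_t2. taut. Qed.

Lemma pv_byc H a : PV (And H (Not a)) a -> PV H a.
Proof. intro P. apply pv_cases with a; [apply pv_hyp| exact P]. Qed.

Lemma pv_notI H a : (forall b, PV (And H a) b) -> PV H (Not a).
Proof.
  intro P. specialize (P (Not a)). apply pv_intro in P. eapply pv_t1; [|exact P]. taut.
Qed.

Lemma pv_imp_hyp H H' p : PV H H' -> PV H' p -> PV H p.
Proof.
  intros A B. eapply Pr_mp; [|exact A]. eapply Pr_mp; [|exact B]. apply Pr_taut. taut.
Qed.

Lemma pv_gen H p : PV (ren_form shI H) p -> PV H (AllI p).
Proof. apply Pr_genI. Qed.
Lemma pv_inst H p t : PV H (AllI p) -> PV H (sub_form (instI t) p).
Proof. intro P. eapply pv_mp; [apply pv_of, Pr_instI|exact P]. Qed.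

Lemma pv_leibI H s t p : PV H (EqI s t) -> PV H (sub_form (instI s) p) -> PV H (sub_form (instI t) p).
Proof. intros A B. eapply pv_mp; [|exact B]. eapply pv_mp; [|exact A]. apply pv_of, Pr_leibI. Qed.
Lemma pv_leibF H s t p : PV H (EqF s t) -> PV H (sub_form (instF s) p) -> PV H (sub_form (instF t) p).
Proof. intros A B. eapply pv_mp; [|exact B]. eapply pv_mp; [|exact A]. apply pv_of, Pr_leibF. Qed.
Lemma pv_leibM H s t p : PV H (EqM s t) -> PV H (sub_form (instM s) p) -> PV H (sub_form (instM t) p).
Proof. intros A B. eapply pv_mp; [|exact B]. eapply pv_mp; [|exact A]. apply pv_of, Pr_leibM. Qed.

Lemma pv_rwI H s t p a b : a = sub_form (instI s) p -> b = sub_form (instI t) p ->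
  PV H (EqI s t) -> PV H a -> PV H b.
Proof. intros -> ->; apply pv_leibI. Qed.
Lemma pv_rwF H s t p a b : a = sub_form (instF s) p -> b = sub_form (instF t) p ->
  PV H (EqF s t) -> PV H a -> PV H b.
Proof. intros -> ->; apply pv_leibF. Qed.
Lemma pv_rwM H s t p a b : a = sub_form (instM s) p -> b = sub_form (instM t) p ->
  PV H (EqM s t) -> PV H a -> PV H b.
Proof. intros -> ->; apply pv_leibM. Qed.

Lemma reflI H t : PV H (EqI t t). Proof. apply pv_of, Pr_reflI. Qed.
Lemma reflF H t : PV H (EqF t t). Proof. apply pv_of, Pr_reflF. Qed.
Lemma reflM H t : PV H (EqM t t). Proof. apply pv_of, Pr_reflM. Qed.

Lemma symI H s t : PV H (EqI s t) -> PV H (EqI t s).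
Proof.
  intro A. refine (pv_rwI H s t (EqI (IVar 0) (ren_i shI s)) _ _ _ _ A (reflI H s)); ssimpl; reflexivity.
Qed.
Lemma symF H s t : PV H (EqF s t) -> PV H (EqF t s).
Proof.
  intro A. refine (pv_rwF H s t (EqF (FVar 0) (ren_f shF s)) _ _ _ _ A (reflF H s)); ssimpl; reflexivity.
Qed.
Lemma symM H s t : PV H (EqM s t) -> PV H (EqM t s).
Proof.
  intro A. refine (pv_rwM H s t (EqM (MVar 0) (ren_m shM s)) _ _ _ _ A (reflM H s)); ssimpl; reflexivity.
Qed.
Lemma transI H s t u : PV H (EqI s t) -> PV H (EqI t u) -> PV H (EqI s u).
Proof.
  intros A B. refine (pv_rwI H t u (EqI (ren_i shI s) (IVar 0)) _ _ _ _ B A); ssimpl; reflexivity.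
Qed.
Lemma transF H s t u : PV H (EqF s t) -> PV H (EqF t u) -> PV H (EqF s u).
Proof.
  intros A B. refine (pv_rwF H t u (EqF (ren_f shF s) (FVar 0)) _ _ _ _ B A); ssimpl; reflexivity.
Qed.
Lemma transM H s t u : PV H (EqM s t) -> PV H (EqM t u) -> PV H (EqM s u).
Proof.
  intros A B. refine (pv_rwM H t u (EqM (ren_m shM s) (MVar 0)) _ _ _ _ B A); ssimpl; reflexivity.
Qed.

(* generic congruences: context c with hole = variable 0 of the relevant sort *)
Lemma congI_i H s t c : PV H (EqI s t) -> PV H (EqI (sub_i (instI s) c) (sub_i (instI t) c)).
Proof.
  intro A. refine (pv_rwI H s t (EqI (ren_i shI (sub_i (instI s) c)) c) _ _ _ _ A (reflI H _));
  ssimpl; reflexivity.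
Qed.
Lemma congI_f H s t c : PV H (EqI s t) -> PV H (EqF (sub_f (instI s) c) (sub_f (instI t) c)).
Proof.
  intro A. refine (pv_rwI H s t (EqF (ren_f shI (sub_f (instI s) c)) c) _ _ _ _ A (reflF H _));
  ssimpl; reflexivity.
Qed.
Lemma congI_m H s t c : PV H (EqI s t) -> PV H (EqM (sub_m (instI s) c) (sub_m (instI t) c)).
Proof.
  intro A. refine (pv_rwI H s t (EqM (ren_m shI (sub_m (instI s) c)) c) _ _ _ _ A (reflM H _));
  ssimpl; reflexivity.
Qed.
Lemma congF_f H s t c : PV H (EqF s t) -> PV H (EqF (sub_f (instF s) c) (sub_f (instF t) c)).
Proof.
  intro A. refine (pv_rwF H s t (EqF (ren_f shF (sub_f (instF s) c)) c) _ _ _ _ A (reflF H _));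
  ssimpl; reflexivity.
Qed.
Lemma congM_f H s t c : PV H (EqM s t) -> PV H (EqF (sub_f (instM s) c) (sub_f (instM t) c)).
Proof.
  intro A. refine (pv_rwM H s t (EqF (ren_f shM (sub_f (instM s) c)) c) _ _ _ _ A (reflF H _));
  ssimpl; reflexivity.
Qed.
Lemma congM_i H s t c : PV H (EqM s t) -> PV H (EqI (sub_i (instM s) c) (sub_i (instM t) c)).
Proof.
  intro A. refine (pv_rwM H s t (EqI (ren_i shM (sub_i (instM s) c)) c) _ _ _ _ A (reflI H _));
  ssimpl; reflexivity.
Qed.
Lemma congM_m H s t c : PV H (EqM s t) -> PV H (EqM (sub_m (instM s) c) (sub_m (instM t) c)).
Proof.
  intro A. refine (pv_rwM H s t (EqM (ren_m shM (sub_m (instM s) c)) c) _ _ _ _ A (reflM H _));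
  ssimpl; reflexivity.
Qed.
Lemma congI_m' H s t c : PV H (EqI s t) -> PV H (EqM (sub_m (instI s) c) (sub_m (instI t) c)).
Proof. apply congI_m. Qed.

Lemma c_FAdd H a a' b b' : PV H (EqF a a') -> PV H (EqF b b') -> PV H (EqF (FAdd a b) (FAdd a' b')).
Proof.
  intros A B. eapply transF.
  - pose proof (congF_f H a a' (FAdd (FVar 0) (ren_f shF b)) A) as X. ssimpl_in X. exact X.
  - pose proof (congF_f H b b' (FAdd (ren_f shF a') (FVar 0)) B) as X. ssimpl_in X. exact X.
Qed.
Lemma c_FMul H a a' b b' : PV H (EqF a a') -> PV H (EqF b b') -> PV H (EqF (FMul a b) (FMul a' b')).
Proof.
  intros A B. eapply transF.
  - pose proof (congF_f H a a' (FMul (FVar 0) (ren_f shF b)) A) as X. ssimpl_in X. exact X.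
  - pose proof (congF_f H b b' (FMul (ren_f shF a') (FVar 0)) B) as X. ssimpl_in X. exact X.
Qed.
Lemma c_FOpp H a a' : PV H (EqF a a') -> PV H (EqF (FOpp a) (FOpp a')).
Proof. intros A. pose proof (congF_f H a a' (FOpp (FVar 0)) A) as X. ssimpl_in X. exact X. Qed.
Lemma c_FInv H a a' : PV H (EqF a a') -> PV H (EqF (FInv a) (FInv a')).
Proof. intros A. pose proof (congF_f H a a' (FInv (FVar 0)) A) as X. ssimpl_in X. exact X. Qed.
Lemma c_IAdd H a a' b b' : PV H (EqI a a') -> PV H (EqI b b') -> PV H (EqI (IAdd a b) (IAdd a' b')).
Proof.
  intros A B. eapply transI.
  - pose proof (congI_i H a a' (IAdd (IVar 0) (ren_i shI b)) A) as X. ssimpl_in X. exact X.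
  - pose proof (congI_i H b b' (IAdd (ren_i shI a') (IVar 0)) B) as X. ssimpl_in X. exact X.
Qed.
Lemma c_IMonus H a a' b b' : PV H (EqI a a') -> PV H (EqI b b') -> PV H (EqI (IMonus a b) (IMonus a' b')).
Proof.
  intros A B. eapply transI.
  - pose proof (congI_i H a a' (IMonus (IVar 0) (ren_i shI b)) A) as X. ssimpl_in X. exact X.
  - pose proof (congI_i H b b' (IMonus (ren_i shI a') (IVar 0)) B) as X. ssimpl_in X. exact X.
Qed.
Lemma c_FEntry H A A' i i' j j' : PV H (EqM A A') -> PV H (EqI i i') -> PV H (EqI j j') ->
  PV H (EqF (FEntry A i j) (FEntry A' i' j')).
Proof.
  intros HA Hi Hj. eapply transF; [|eapply transF].
  - pose proof (congM_f H A A' (FEntry (MVar 0) (ren_i shM i) (ren_i shM j)) HA) as X. ssimpl_in X. exact X.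
  - pose proof (congI_f H i i' (FEntry (ren_m shI A') (IVar 0) (ren_i shI j)) Hi) as X. ssimpl_in X. exact X.
  - pose proof (congI_f H j j' (FEntry (ren_m shI A') (ren_i shI i') (IVar 0)) Hj) as X. ssimpl_in X. exact X.
Qed.
Lemma c_FSum H A A' : PV H (EqM A A') -> PV H (EqF (FSum A) (FSum A')).
Proof. intros HA. pose proof (congM_f H A A' (FSum (MVar 0)) HA) as X. ssimpl_in X. exact X. Qed.
Lemma c_IRows H A A' : PV H (EqM A A') -> PV H (EqI (IRows A) (IRows A')).
Proof. intros HA. pose proof (congM_i H A A' (IRows (MVar 0)) HA) as X. ssimpl_in X. exact X. Qed.
Lemma c_ICols H A A' : PV H (EqM A A') -> PV H (EqI (ICols A) (ICols A')).
Proof. intros HA. pose proof (congM_i H A A' (ICols (MVar 0)) HA) as X. ssimpl_in X. exact X. Qed.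
Lemma c_MPow H k k' A A' : PV H (EqI k k') -> PV H (EqM A A') -> PV H (EqM (MPow k A) (MPow k' A')).
Proof.
  intros Hk HA. eapply transM.
  - pose proof (congI_m H k k' (MPow (IVar 0) (ren_m shI A)) Hk) as X. ssimpl_in X. exact X.
  - pose proof (congM_m H A A' (MPow (ren_i shM k') (MVar 0)) HA) as X. ssimpl_in X. exact X.
Qed.
Lemma srcomp_lam_inst m : srcomp (uprI (uprI shI)) (upsI (upsI (instI m))) = ids.
Proof.
  unfold srcomp, upsI, uprI, instI, ids; simpl; f_equal; apply functional_extensionality;
  intros [|[|n]]; reflexivity.
Qed.
Lemma sub_lam_inst m t : sub_f (upsI (upsI (instI m))) (ren_f (uprI (uprI shI)) t) = t.
Proof. rewrite sub_ren_gen_f, srcomp_lam_inst. apply sub_id_syn. Qed.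
Hint Rewrite sub_lam_inst : ssimpl.

Lemma c_MLam H m m' n n' t : PV H (EqI m m') -> PV H (EqI n n') -> PV H (EqM (MLam m n t) (MLam m' n' t)).
Proof.
  intros Hm Hn. eapply transM.
  - pose proof (congI_m H m m' (MLam (IVar 0) (ren_i shI n) (ren_f (uprI (uprI shI)) t)) Hm) as X.
    ssimpl_in X. exact X.
  - pose proof (congI_m H n n' (MLam (ren_i shI m') (IVar 0) (ren_f (uprI (uprI shI)) t)) Hn) as X.
    ssimpl_in X. exact X.
Qed.

Lemma tr_Le H a a' b b' : PV H (EqI a a') -> PV H (EqI b b') -> PV H (Le a b) -> PV H (Le a' b').
Proof.
  intros A B P.
  refine (pv_rwI H b b' (Le (ren_i shI a') (IVar 0)) _ _ _ _ B _); [ssimpl; reflexivity.. |].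
  refine (pv_rwI H a a' (Le (IVar 0) (ren_i shI b)) _ _ _ _ A P); ssimpl; reflexivity.
Qed.
Lemma tr_EqI H a a' b b' : PV H (EqI a a') -> PV H (EqI b b') -> PV H (EqI a b) -> PV H (EqI a' b').
Proof. intros A B P. eapply transI; [apply symI, A|]. eapply transI; eauto. Qed.
Lemma tr_EqF H a a' b b' : PV H (EqF a a') -> PV H (EqF b b') -> PV H (EqF a b) -> PV H (EqF a' b').
Proof. intros A B P. eapply transF; [apply symF, A|]. eapply transF; eauto. Qed.

Ltac ax := apply pv_of, Pr_ax; constructor.


Lemma f_addC H a b : PV H (EqF (FAdd a b) (FAdd b a)). Proof. ax. Qed.
Lemma f_addA H a b c : PV H (EqF (FAdd (FAdd a b) c) (FAdd a (FAdd b c))). Proof. ax. Qed.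
Lemma f_add0 H a : PV H (EqF (FAdd a FZero) a). Proof. ax. Qed.
Lemma f_opp H a : PV H (EqF (FAdd a (FOpp a)) FZero). Proof. ax. Qed.
Lemma f_mulC H a b : PV H (EqF (FMul a b) (FMul b a)). Proof. ax. Qed.
Lemma f_mulA H a b c : PV H (EqF (FMul (FMul a b) c) (FMul a (FMul b c))). Proof. ax. Qed.
Lemma f_mul1 H a : PV H (EqF (FMul a FOne) a). Proof. ax. Qed.
Lemma f_dist H a b c : PV H (EqF (FMul a (FAdd b c)) (FAdd (FMul a b) (FMul a c))). Proof. ax. Qed.
Lemma f_add0l H a : PV H (EqF (FAdd FZero a) a).
Proof. eapply transF; [apply f_addC| apply f_add0]. Qed.
Lemma f_mul1l H a : PV H (EqF (FMul FOne a) a).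
Proof. eapply transF; [apply f_mulC| apply f_mul1]. Qed.

Lemma f_mul0 H x : PV H (EqF (FMul x FZero) FZero).
Proof.
  set (y := FMul x FZero).
  assert (E : PV H (EqF y (FAdd y y))).
  { eapply transF; [| apply f_dist]. apply c_FMul; [apply reflF| apply symF, f_add0]. }
  apply symF.
  eapply transF; [apply symF, (f_opp H y)|].
  eapply transF; [apply c_FAdd; [exact E| apply reflF]|].
  eapply transF; [apply f_addA|].
  eapply transF; [apply c_FAdd; [apply reflF| apply f_opp]|].
  apply f_add0.
Qed.
Lemma f_mul0l H x : PV H (EqF (FMul FZero x) FZero).
Proof. eapply transF; [apply f_mulC| apply f_mul0]. Qed.
Lemma f_opp0 H : PV H (EqF (FOpp FZero) FZero).
Proof. eapply transF; [apply symF, f_add0l| apply f_opp]. Qed.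

Lemma f_sub0_eq H a b : PV H (EqF (FAdd a (FOpp b)) FZero) -> PV H (EqF a b).
Proof.
  intro E.
  eapply transF; [apply symF, f_add0|].
  eapply transF; [apply c_FAdd; [apply reflF| apply symF, (f_opp H b)]|].
  eapply transF; [apply c_FAdd; [apply reflF| apply f_addC]|].
  eapply transF; [apply symF, f_addA|].
  eapply transF; [apply c_FAdd; [exact E| apply reflF]|].
  apply f_add0l.
Qed.
Lemma f_eq_sub0 H a b : PV H (EqF a b) -> PV H (EqF (FAdd a (FOpp b)) FZero).
Proof.
  intro E. eapply transF; [apply c_FAdd; [exact E| apply reflF]| apply f_opp].
Qed.
Lemma f_inv H a : PV H (Not (EqF a FZero)) -> PV H (EqF (FMul a (FInv a)) FOne).
Proof. intro P. eapply pv_mp; [ax| exact P]. Qed.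
Lemma f_01 H : PV H (Not (EqF FZero FOne)). Proof. ax. Qed.

Lemma f_one_m_one H : PV H (EqF (FAdd FOne (FOpp FOne)) FZero). Proof. apply f_opp. Qed.
Lemma f_one_m_zero H : PV H (EqF (FAdd FOne (FOpp FZero)) FOne).
Proof. eapply transF; [apply c_FAdd; [apply reflF| apply f_opp0]| apply f_add0]. Qed.

Definition Good (phi : form) (d : fterm) : Prop :=
  PV phi (EqF d FOne) /\ PV (Not phi) (EqF d FZero).

Lemma pv_use H a b : PV H a -> PV a b -> PV H b.
Proof. intros A B. eapply pv_imp_hyp; eauto. Qed.

Lemma pv_contrapos H x y : PV (And H x) y -> PV H (Not y) -> PV H (Not x).
Proof. intros A B. apply pv_intro in A. eapply pv_t2; [|exact A|exact B]. taut. Qed.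

Lemma good_iff phi d : Good phi d -> LAP_proves (Iff phi (EqF d FOne)).
Proof.
  intros [G1 G2].
  assert (P2 : PV (EqF d FOne) phi).
  { apply pv_byc.
    assert (A : PV (And (EqF d FOne) (Not phi)) (EqF d FZero)) by (eapply pv_use; [apply pv_hyp| exact G2]).
    assert (B : PV (And (EqF d FOne) (Not phi)) (EqF d FOne)) by (apply pv_weak, pv_id).
    eapply pv_contra; [| apply (f_01 _)].
    eapply transF; [apply symF, A| exact B]. }
  unfold Iff. apply Pr_mp with (p := And (Imp phi (EqF d FOne)) (Imp (EqF d FOne) phi)).
  - apply Pr_taut. taut.
  - unfold PV in *. eapply Pr_mp; [eapply Pr_mp; [|exact G1]|exact P2]. apply Pr_taut. taut.
Qed.

Lemma good_transfer phi psi d : PV phi psi -> PV psi phi -> Good psi d -> Good phi d.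
Proof.
  intros A B [G1 G2]. split.
  - eapply pv_use; eauto.
  - eapply pv_use; [|exact G2]. eapply pv_contrapos; [| apply pv_id].
    eapply pv_use; [apply pv_hyp| exact B].
Qed.

Definition d_le (a b : iterm) : fterm := FCond (QLe a b) FOne FZero.
Definition d_eqI (a b : iterm) : fterm := FCond (QEq a b) FOne FZero.

Lemma good_le a b : Good (Le a b) (d_le a b).
Proof.
  split.
  - eapply pv_mp; [ax|]. apply pv_id.
  - eapply pv_mp; [ax|]. apply pv_id.
Qed.
Lemma good_eqI a b : Good (EqI a b) (d_eqI a b).
Proof.
  split.
  - eapply pv_mp; [ax|]. apply pv_id.
  - eapply pv_mp; [ax|]. apply pv_id.
Qed.

Definition d_not (d : fterm) : fterm := FAdd FOne (FOpp d).

Lemma good_not p d : Good p d -> Good (Not p) (d_not d).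
Proof.
  intros [G1 G2]. split.
  - eapply transF; [apply c_FAdd; [apply reflF| apply c_FOpp, G2]| apply f_one_m_zero].
  - assert (A : PV (Not (Not p)) (EqF d FOne)) by (eapply pv_use; [|exact G1]; apply Pr_taut; taut).
    eapply transF; [apply c_FAdd; [apply reflF| apply c_FOpp, A]| apply f_one_m_one].
Qed.

Lemma good_and p q d e : Good p d -> Good q e -> Good (And p q) (FMul d e).
Proof.
  intros [G1 G2] [E1 E2]. split.
  - assert (A : PV (And p q) (EqF d FOne)) by (eapply pv_use; [|exact G1]; apply Pr_taut; taut).
    assert (B : PV (And p q) (EqF e FOne)) by (eapply pv_use; [|exact E1]; apply Pr_taut; taut).
    eapply transF; [apply c_FMul; eauto| apply f_mul1].
  - apply pv_cases with p.
    + assert (B : PV (And (Not (And p q)) p) (EqF e FZero)) by (eapply pv_use; [|exact E2]; apply Pr_taut; taut).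
      eapply transF; [apply c_FMul; [apply reflF| exact B]| apply f_mul0].
    + assert (B : PV (And (Not (And p q)) (Not p)) (EqF d FZero)) by (eapply pv_use; [|exact G2]; apply Pr_taut; taut).
      eapply transF; [apply c_FMul; [exact B| apply reflF]| apply f_mul0l].
Qed.

Definition d_eqF (a b : fterm) : fterm :=
  let u := FAdd a (FOpp b) in FAdd FOne (FOpp (FMul u (FInv u))).

Lemma good_eqF a b : Good (EqF a b) (d_eqF a b).
Proof.
  unfold d_eqF. split.
  - assert (U : PV (EqF a b) (EqF (FAdd a (FOpp b)) FZero)) by (apply f_eq_sub0, pv_id).
    eapply transF; [apply c_FAdd; [apply reflF| apply c_FOpp]|].
    + eapply transF; [apply c_FMul; [exact U| apply reflF]| apply f_mul0l].
    + apply f_one_m_zero.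
  - assert (U : PV (Not (EqF a b)) (Not (EqF (FAdd a (FOpp b)) FZero))).
    { eapply pv_contrapos; [| apply pv_id]. apply f_sub0_eq, pv_hyp. }
    eapply transF; [apply c_FAdd; [apply reflF| apply c_FOpp, f_inv, U]| apply f_one_m_one].
Qed.

Lemma good_or p q d e : Good p d -> Good q e ->
  Good (Or p q) (d_not (FMul (d_not d) (d_not e))).
Proof.
  intros G E. eapply good_transfer; [| | apply good_not, good_and; apply good_not; eauto];
  apply Pr_taut; taut.
Qed.
Lemma good_imp p q d e : Good p d -> Good q e ->
  Good (Imp p q) (d_not (FMul d (d_not e))).
Proof.
  intros G E. eapply good_transfer; [| | apply good_not, good_and; [exact G| apply good_not; eauto]];
  apply Pr_taut; taut.
Qed.

Lemma i_addC H a b : PV H (EqI (IAdd a b) (IAdd b a)). Proof. ax. Qed.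
Lemma i_addA H a b c : PV H (EqI (IAdd (IAdd a b) c) (IAdd a (IAdd b c))). Proof. ax. Qed.
Lemma i_add0 H a : PV H (EqI (IAdd a IZero) a). Proof. ax. Qed.
Lemma i_add0l H a : PV H (EqI (IAdd IZero a) a).
Proof. eapply transI; [apply i_addC| apply i_add0]. Qed.
Lemma le_refl H a : PV H (Le a a). Proof. ax. Qed.
Lemma le_0 H a : PV H (Le IZero a). Proof. ax. Qed.
Lemma le_trans H a b c : PV H (Le a b) -> PV H (Le b c) -> PV H (Le a c).
Proof. intros A B. eapply pv_mp; [ax| apply pv_and; eauto]. Qed.
Lemma le_anti H a b : PV H (Le a b) -> PV H (Le b a) -> PV H (EqI a b).
Proof. intros A B. eapply pv_mp; [ax| apply pv_and; eauto]. Qed.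
Lemma le_total H a b : PV H (Or (Le a b) (Le b a)). Proof. ax. Qed.
Lemma lt_add H a b u : PV H (Lt a b) -> PV H (Lt (IAdd a u) (IAdd b u)).
Proof. intros A. eapply pv_mp; [ax| exact A]. Qed.
Lemma lt_01 H : PV H (Lt IZero IOne). Proof. ax. Qed.
Lemma discr H a b : PV H (Lt a b) -> PV H (Le (IAdd a IOne) b).
Proof. intros A. eapply pv_mp; [ax| exact A]. Qed.
Lemma lt_le H a b : PV H (Lt a b) -> PV H (Le a b).
Proof. apply pv_andl. Qed.
Lemma lt_neq H a b : PV H (Lt a b) -> PV H (Not (EqI a b)).
Proof. apply pv_andr. Qed.
Lemma mk_lt H a b : PV H (Le a b) -> PV H (Not (EqI a b)) -> PV H (Lt a b).
Proof. apply pv_and. Qed.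

Lemma eq_le H a b : PV H (EqI a b) -> PV H (Le a b).
Proof. intros E. eapply tr_Le; [apply reflI| exact E| apply le_refl]. Qed.

Lemma le_add1 H a b : PV H (Le a b) -> PV H (Le (IAdd a IOne) (IAdd b IOne)).
Proof.
  intros A. apply pv_cases with (EqI a b).
  - apply eq_le, c_IAdd; [apply pv_hyp| apply reflI].
  - apply lt_le, lt_add, mk_lt; [apply pv_weak, A| apply pv_hyp].
Qed.

Lemma not_le_lt H a b : PV H (Not (Le a b)) -> PV H (Lt b a).
Proof.
  intros A. apply mk_lt.
  - eapply pv_t2; [| apply (le_total H a b)| exact A]. taut.
  - eapply pv_contrapos; [| exact A]. apply eq_le, symI, pv_hyp.
Qed.

Lemma le_add1_inv H a b : PV H (Le (IAdd a IOne) (IAdd b IOne)) -> PV H (Le a b).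
Proof.
  intros A. apply pv_byc.
  assert (L : PV (And H (Not (Le a b))) (Lt (IAdd b IOne) (IAdd a IOne)))
    by (apply lt_add, not_le_lt, pv_hyp).
  eapply pv_contra; [| apply (lt_neq _ _ _ L)].
  apply le_anti; [apply lt_le, L| apply pv_weak, A].
Qed.

Lemma add1_inj H a b : PV H (EqI (IAdd a IOne) (IAdd b IOne)) -> PV H (EqI a b).
Proof.
  intros E. apply le_anti; apply le_add1_inv, eq_le; [exact E| apply symI, E].
Qed.

Lemma lt_succ H a : PV H (Lt a (IAdd a IOne)).
Proof.
  pose proof (lt_add H IZero IOne a (lt_01 H)) as L.
  apply mk_lt.
  - eapply tr_Le; [apply i_add0l| apply i_addC| apply lt_le, L].
  - eapply pv_contrapos; [| apply (lt_neq _ _ _ L)].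
    eapply tr_EqI; [apply symI, i_add0l | apply i_addC | apply pv_hyp].
Qed.
Lemma le_succ H a : PV H (Le a (IAdd a IOne)).
Proof. apply lt_le, lt_succ. Qed.

Lemma one_le_succ H a : PV H (Le IOne (IAdd a IOne)).
Proof. eapply tr_Le; [apply i_add0l| apply reflI| apply le_add1, le_0]. Qed.

Lemma le_lt_trans H a b c : PV H (Le a b) -> PV H (Lt b c) -> PV H (Lt a c).
Proof.
  intros A B. apply mk_lt.
  - eapply le_trans; [exact A| apply lt_le, B].
  - eapply pv_contrapos; [| apply (lt_neq _ _ _ B)].
    apply le_anti; [apply lt_le, pv_weak, B|].
    eapply tr_Le; [apply pv_hyp| apply reflI| apply pv_weak, A].
Qed.

Lemma monus_succ H a : PV H (EqI (IMonus (IAdd a IOne) IOne) a).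
Proof.
  apply add1_inj. eapply pv_mp; [ax| apply one_le_succ].
Qed.

Lemma le_succ_cases H m a : PV H (Le m (IAdd a IOne)) -> PV H (Not (Le m a)) -> PV H (EqI m (IAdd a IOne)).
Proof.
  intros A B. apply le_anti; [exact A|]. apply discr, not_le_lt, B.
Qed.

Lemma zero_or_pos H a : PV H (Or (EqI a IZero) (Le IOne a)).
Proof.
  apply pv_cases with (EqI a IZero).
  - apply pv_orl, pv_hyp.
  - apply pv_orr. eapply tr_Le; [apply i_add0l| apply reflI|].
    apply discr, mk_lt; [apply le_0|].
    eapply pv_contrapos; [| apply pv_hyp]. apply symI, pv_hyp.
Qed.

Lemma not_one_le_zero H : PV H (Not (Le IOne IZero)).
Proof.
  eapply pv_contrapos; [| apply (lt_neq _ _ _ (lt_01 H))].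
  apply le_anti; [apply le_0| apply pv_hyp].
Qed.

Lemma one_lt_succ H a : PV H (Le IOne a) -> PV H (Lt IOne (IAdd a IOne)).
Proof. intros A. eapply le_lt_trans; [exact A| apply lt_succ]. Qed.

Lemma le_succ_r H a b : PV H (Le a b) -> PV H (Le a (IAdd b IOne)).
Proof. intros A. eapply le_trans; [exact A| apply le_succ]. Qed.

Lemma le_of_succ_le H a b : PV H (Le (IAdd a IOne) b) -> PV H (Le a b).
Proof. intros A. eapply le_trans; [apply le_succ| exact A]. Qed.

Lemma succ_le_not_le H a b : PV H (Le (IAdd a IOne) b) -> PV H (Not (Le b a)).
Proof.
  intros A. eapply pv_contrapos; [| apply (lt_neq _ _ _ (lt_succ H a))].
  apply le_anti; [apply le_succ|]. eapply le_trans; [apply pv_weak, A| apply pv_hyp].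
Qed.

Lemma tr_Lt H a a' b b' : PV H (EqI a a') -> PV H (EqI b b') -> PV H (Lt a b) -> PV H (Lt a' b').
Proof.
  intros A B L. apply mk_lt.
  - eapply tr_Le; [exact A| exact B| apply lt_le, L].
  - eapply pv_contrapos; [| apply (lt_neq _ _ _ L)].
    eapply tr_EqI; [apply symI, pv_weak, A| apply symI, pv_weak, B| apply pv_hyp].
Qed.

Lemma pv_ind H p : is_open p = true -> PV H (sub_form (instI IZero) p) ->
  PV (ren_form shI H) (Imp p (sub_form succ0 p)) -> PV H (AllI p).
Proof.
  intros O B S. eapply pv_mp; [apply pv_of, Pr_ax, AxInd, O|].
  apply pv_and; [exact B| apply pv_gen, S].
Qed.

Lemma lamR H m n t : PV H (EqI (IRows (MLam m n t)) m). Proof. ax. Qed.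
Lemma lamC H m n t : PV H (EqI (ICols (MLam m n t)) n). Proof. ax. Qed.
Lemma lamE H m n t i j : PV H (Le IOne i) -> PV H (Le i m) -> PV H (Le IOne j) -> PV H (Le j n) ->
  PV H (EqF (FEntry (MLam m n t) i j) (sub_f (inst2 i j) t)).
Proof.
  intros A B C D. eapply pv_mp; [ax|]. apply pv_and; apply pv_and; auto.
Qed.
Lemma entry0_i H A i j : PV H (EqI i IZero) -> PV H (EqF (FEntry A i j) FZero).
Proof. intros E. eapply pv_mp; [ax|]. apply pv_orl, pv_orl, E. Qed.
Lemma entry0_j H A i j : PV H (EqI j IZero) -> PV H (EqF (FEntry A i j) FZero).
Proof. intros E. eapply pv_mp; [ax|]. apply pv_orr, pv_orl, E. Qed.
Lemma entry0_ir H A i j : PV H (Lt (IRows A) i) -> PV H (EqF (FEntry A i j) FZero).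
Proof. intros E. eapply pv_mp; [ax|]. apply pv_orl, pv_orr, E. Qed.
Lemma entry0_jc H A i j : PV H (Lt (ICols A) j) -> PV H (EqF (FEntry A i j) FZero).
Proof. intros E. eapply pv_mp; [ax|]. apply pv_orr, pv_orr, E. Qed.

Lemma srcomp_body_id :
  srcomp (uprI (uprI shI)) (srcomp (uprI (uprI shI)) (inst2 (IVar 1) (IVar 0))) = ids.
Proof.
  unfold srcomp, uprI, inst2, ids; simpl; f_equal; apply functional_extensionality;
  intros [|[|n]]; reflexivity.
Qed.
Lemma sub_body_id t :
  sub_f (inst2 (IVar 1) (IVar 0)) (ren_f (uprI (uprI shI)) (ren_f (uprI (uprI shI)) t)) = t.
Proof. rewrite !sub_ren_gen_f, srcomp_body_id. apply sub_id_syn. Qed.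

Definition bb (t : fterm) := ren_f (uprI (uprI shI)) (ren_f (uprI (uprI shI)) t).
Definition sh2f (H : form) := ren_form shI (ren_form shI H).

(* range context for entries i = IVar 1, j = IVar 0 *)
Definition RangeCtx (H : form) (m n : iterm) : form :=
  And (sh2f H) (And (And (Le IOne (IVar 1)) (Le (IVar 1) (sh2i m)))
                    (And (Le IOne (IVar 0)) (Le (IVar 0) (sh2i n)))).

Lemma lam_ext H m n t1 t2 :
  PV (RangeCtx H m n) (EqF t1 t2) -> PV H (EqM (MLam m n t1) (MLam m n t2)).
Proof.
  intros P. eapply pv_mp; [ax|].
  apply pv_and; [apply pv_and; [eapply transI; [apply lamR| apply symI, lamR]| eapply transI; [apply lamC| apply symI, lamC]]|].
  unfold AllLe. apply pv_gen, pv_intro, pv_gen, pv_intro.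
  set (C := And _ _).
  assert (HC : PV C (sh2f H)) by (unfold C, sh2f; simpl; apply pv_weak; eapply pv_t1; [|apply pv_id]; taut).
  assert (Ri : PV C (Le (IVar 1) (IRows (MLam (sh2i m) (sh2i n) (bb t1))))) by
      (unfold C, sh2i, bb; apply pv_weak; simpl; eapply pv_t1; [|apply pv_id]; taut).
  assert (Rj : PV C (Le (IVar 0) (ICols (MLam (sh2i m) (sh2i n) (bb t1))))) by (unfold C; apply pv_hyp).
  clearbody C.
  assert (Ri' : PV C (Le (IVar 1) (sh2i m))) by (eapply tr_Le; [apply reflI| apply lamR| exact Ri]).
  assert (Rj' : PV C (Le (IVar 0) (sh2i n))) by (eapply tr_Le; [apply reflI| apply lamC| exact Rj]).
  clear Ri Rj. unfold sh2m; simpl. fold (bb t1). fold (bb t2).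
  fold (sh2i m) (sh2i n).
  eapply pv_or_elim; [apply (zero_or_pos C (IVar 1))| |].
  { eapply transF; [apply entry0_i, pv_hyp| apply symF, entry0_i, pv_hyp]. }
  eapply pv_or_elim; [apply (zero_or_pos _ (IVar 0))| |].
  { eapply transF; [apply entry0_j, pv_hyp| apply symF, entry0_j, pv_hyp]. }
  set (C' := And (And C _) _).
  assert (I1 : PV C' (Le IOne (IVar 1))) by (apply pv_weak, pv_hyp).
  assert (J1 : PV C' (Le IOne (IVar 0))) by (apply pv_hyp).
  assert (I2 : PV C' (Le (IVar 1) (sh2i m))) by (do 2 apply pv_weak; exact Ri').
  assert (J2 : PV C' (Le (IVar 0) (sh2i n))) by (do 2 apply pv_weak; exact Rj').
  assert (HC' : PV C' (sh2f H)) by (do 2 apply pv_weak; exact HC).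
  clearbody C'.
  eapply transF; [apply lamE; eauto|]. eapply transF; [|apply symF, lamE; eauto].
  unfold i2, j2, bb. rewrite !sub_body_id.
  eapply pv_imp_hyp; [| exact P]. unfold RangeCtx.
  apply pv_and; [exact HC'| apply pv_and; apply pv_and; auto].
Qed.

Lemma sum0 H A : PV H (Or (EqI (IRows A) IZero) (EqI (ICols A) IZero)) -> PV H (EqF (FSum A) FZero).
Proof. intros E. eapply pv_mp; [ax| exact E]. Qed.
Lemma sum1 H A : PV H (EqI (IRows A) IOne) -> PV H (EqI (ICols A) IOne) -> PV H (EqF (FSum A) (FEntry A IOne IOne)).
Proof. intros E F. eapply pv_mp; [ax| apply pv_and; eauto]. Qed.
Lemma sumRow H A : PV H (EqI (IRows A) IOne) -> PV H (Lt IOne (ICols A)) ->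
  PV H (EqF (FSum A) (FAdd (FSum (MLam IOne (IMonus (ICols A) IOne) (FEntry (sh2m A) i2 j2)))
                            (FEntry A IOne (ICols A)))).
Proof. intros E F. eapply pv_mp; [ax| apply pv_and; eauto]. Qed.
Lemma sumCol H A : PV H (EqI (ICols A) IOne) -> PV H (EqF (FSum A) (FSum (MTr A))).
Proof. intros E. eapply pv_mp; [ax| exact E]. Qed.
Lemma pow0 H A : PV H (EqI (IRows A) (ICols A)) -> PV H (EqM (MPow IZero A) (MId (IRows A))).
Proof. intros E. eapply pv_mp; [ax| exact E]. Qed.
Lemma powS H k A : PV H (EqI (IRows A) (ICols A)) -> PV H (EqM (MPow (IAdd k IOne) A) (MMul (MPow k A) A)).
Proof. intros E. eapply pv_mp; [ax| exact E]. Qed.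

Lemma ras_i x u : ren_i x u = sub_i (ren2sub x) u. Proof. apply ren_as_sub_syn. Qed.
Lemma ras_f x u : ren_f x u = sub_f (ren2sub x) u. Proof. apply ren_as_sub_syn. Qed.
Lemma ras_m x u : ren_m x u = sub_m (ren2sub x) u. Proof. apply ren_as_sub_syn. Qed.
Lemma ras_q x u : ren_q x u = sub_q (ren2sub x) u. Proof. apply ren_as_sub_syn. Qed.
Lemma ss_i s t u : sub_i t (sub_i s u) = sub_i (sscomp s t) u. Proof. apply sub_sub_syn. Qed.
Lemma ss_f s t u : sub_f t (sub_f s u) = sub_f (sscomp s t) u. Proof. apply sub_sub_syn. Qed.
Lemma ss_m s t u : sub_m t (sub_m s u) = sub_m (sscomp s t) u. Proof. apply sub_sub_syn. Qed.
Lemma ss_q s t u : sub_q t (sub_q s u) = sub_q (sscomp s t) u. Proof. apply sub_sub_syn. Qed.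

Ltac snorm := rewrite ?ras_i, ?ras_f, ?ras_m, ?ras_q; rewrite ?ss_i, ?ss_f, ?ss_m, ?ss_q.
Ltac seq_solve :=
  snorm; f_equal;
  unfold sscomp, ren2sub, inst2, instI, instF, instM, succ0, upsI, upsF, upsM, uprI, uprF, uprM,
    shI, shF, shM, ids; simpl; f_equal; apply functional_extensionality;
  intros [|[|[|[|n]]]]; simpl; reflexivity.

Definition sig1 : sub := Sub (fun n => match n with 0 => IVar 0 | 1 => IOne | S (S k) => IVar (S k) end) FVar MVar.



Definition hv (h : fterm) (a : iterm) : fterm := sub_f (inst2 IOne a) h.

Lemma inst_sig1 a h : sub_f (instI a) (sub_f sig1 h) = hv h a.
Proof. unfold hv. seq_solve. Qed.

Lemma cong_hv H h a b : PV H (EqI a b) -> PV H (EqF (hv h a) (hv h b)).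
Proof. intros E. pose proof (congI_f H a b (sub_f sig1 h) E) as X. rewrite !inst_sig1 in X. exact X. Qed.

Definition Zf (M m : iterm) (h : fterm) : form :=
  AllI (Imp (And (And (Le IOne (IVar 0)) (Le (IVar 0) (ren_i shI M))) (Not (EqI (IVar 0) (ren_i shI m))))
            (EqF (sub_f sig1 h) FZero)).

Definition uu := uprI (uprI shI).

Lemma ren_Zf M m h : ren_form shI (Zf M m h) = Zf (ren_i shI M) (ren_i shI m) (ren_f uu h).
Proof.
  unfold Zf, uu; simpl.
  assert (E1 : forall u, ren_i (uprI shI) (ren_i shI u) = ren_i shI (ren_i shI u)) by (intros; seq_solve).
  assert (E2 : ren_f (uprI shI) (sub_f sig1 h) = sub_f sig1 (ren_f (uprI (uprI shI)) h)) by seq_solve.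
  rewrite !E1, E2. reflexivity.
Qed.

Lemma use_Zf G M m h a : PV G (Zf M m h) -> PV G (Le IOne a) -> PV G (Le a M) -> PV G (Not (EqI a m)) ->
  PV G (EqF (hv h a) FZero).
Proof.
  intros Z A B C. pose proof (pv_inst G _ a Z) as X. ssimpl_in X. rewrite inst_sig1 in X.
  eapply pv_mp; [exact X| apply pv_and; [apply pv_and|]; auto].
Qed.

Definition psi (M m : iterm) (h V : fterm) (nu : iterm) : form :=
  Imp (Le nu M) (And (Imp (Le m nu) (EqF (FSum (MLam IOne nu h)) V))
                     (Imp (Not (Le m nu)) (EqF (FSum (MLam IOne nu h)) FZero))).

Lemma rowsum_rec G nu h : 
  PV G (EqF (FSum (MLam IOne (IAdd nu IOne) h)) (FAdd (FSum (MLam IOne nu h)) (hv h (IAdd nu IOne)))).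
Proof.
  eapply pv_or_elim; [apply (zero_or_pos G nu)| |].
  - set (G' := And G _).
    assert (E : PV G' (EqI nu IZero)) by apply pv_hyp. clearbody G'.
    assert (E1 : PV G' (EqI (IAdd nu IOne) IOne)) by
        (eapply transI; [apply c_IAdd; [exact E| apply reflI]| apply i_add0l]).
    eapply transF; [apply sum1; [apply lamR| eapply transI; [apply lamC| exact E1]]|].
    eapply transF; [apply lamE; [apply le_refl| apply le_refl| apply le_refl| apply one_le_succ]|].
    fold (hv h IOne).
    eapply transF; [|apply c_FAdd; [apply symF, sum0, pv_orr; eapply transI; [apply lamC| exact E]| apply reflF]].
    eapply transF; [|apply symF, f_add0l]. apply cong_hv, symI, E1.
  - set (G' := And G _).
    assert (E : PV G' (Le IOne nu)) by apply pv_hyp. clearbody G'.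
    set (L := MLam IOne (IAdd nu IOne) h).
    assert (LC : PV G' (EqI (ICols L) (IAdd nu IOne))) by apply lamC.
    eapply transF; [apply sumRow; [apply lamR| eapply tr_Lt; [apply reflI| apply symI, LC| ]]|].
    + apply one_lt_succ, E.
    + apply c_FAdd.
      * apply c_FSum. eapply transM; [apply c_MLam; [apply reflI| eapply transI; [apply c_IMonus; [exact LC| apply reflI]| apply monus_succ]]|].
        apply lam_ext. unfold RangeCtx, L, sh2m, i2, j2. simpl.
        set (C := And _ _).
        assert (I1 : PV C (Le IOne (IVar 1))) by (apply pv_t1 with (a := C); [taut| apply pv_id]).
        assert (I2 : PV C (Le (IVar 1) (sh2i IOne))) by (apply pv_t1 with (a := C); [taut| apply pv_id]).
        change (sh2i IOne) with IOne in I2.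
        assert (J1 : PV C (Le IOne (IVar 0))) by (apply pv_t1 with (a := C); [taut| apply pv_id]).
        assert (J2 : PV C (Le (IVar 0) (sh2i nu))) by (apply pv_t1 with (a := C); [taut| apply pv_id]).
        clearbody C.
        eapply transF; [apply lamE; auto; apply le_succ_r, J2|].
        pose proof (sub_body_id h) as SB. rewrite SB. apply reflF.
      * eapply transF; [apply c_FEntry; [apply reflM| apply reflI| exact LC]|].
        apply lamE; [apply le_refl| apply le_refl| apply one_le_succ| apply le_refl].
Qed.

Lemma srcomp_lam_succ0 : srcomp uu (upsI (upsI succ0)) = ren2sub uu.
Proof.
  unfold srcomp, uu, upsI, uprI, succ0, ren2sub; simpl; f_equal; apply functional_extensionality;
  intros [|[|n]]; reflexivity.
Qed.
Lemma sub_lam_succ0 h : sub_f (upsI (upsI succ0)) (ren_f (uprI (uprI shI)) h) = ren_f (uprI (uprI shI)) h.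
Proof. fold uu. rewrite sub_ren_gen_f, srcomp_lam_succ0. symmetry; apply ras_f. Qed.
Hint Rewrite sub_lam_succ0 : ssimpl.

Lemma rowsum_step G M m h V nu :
  PV G (Le IOne m) -> PV G (Zf M m h) -> PV G (EqF V (hv h m)) -> PV G (psi M m h V nu) ->
  PV G (psi M m h V (IAdd nu IOne)).
Proof.
  intros H1 Z HV IH. unfold psi. apply pv_intro.
  set (G1 := And G _).
  assert (B : PV G1 (Le (IAdd nu IOne) M)) by apply pv_hyp.
  assert (IH1 : PV G1 (And (Imp (Le m nu) (EqF (FSum (MLam IOne nu h)) V))
                     (Imp (Not (Le m nu)) (EqF (FSum (MLam IOne nu h)) FZero)))).
  { eapply pv_mp; [apply pv_weak, IH| apply le_of_succ_le, B]. }
  assert (R : PV G1 (EqF (FSum (MLam IOne (IAdd nu IOne) h)) (FAdd (FSum (MLam IOne nu h)) (hv h (IAdd nu IOne)))))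
    by apply rowsum_rec.
  assert (H1' : PV G1 (Le IOne m)) by (apply pv_weak, H1).
  assert (Z' : PV G1 (Zf M m h)) by (apply pv_weak, Z).
  assert (HV' : PV G1 (EqF V (hv h m))) by (apply pv_weak, HV).
  clearbody G1. clear IH H1 Z HV.
  apply pv_and; apply pv_intro.
  - apply pv_cases with (a := Le m nu).
    + set (G2 := And (And G1 _) _).
      assert (R2 : PV G2 (EqF (FSum (MLam IOne (IAdd nu IOne) h)) (FAdd (FSum (MLam IOne nu h)) (hv h (IAdd nu IOne))))) by (do 2 apply pv_weak; exact R).
      assert (S : PV G2 (EqF (FSum (MLam IOne nu h)) V)) by (eapply pv_mp; [eapply pv_andl; do 2 apply pv_weak; exact IH1| apply pv_hyp]).
      assert (Zr : PV G2 (EqF (hv h (IAdd nu IOne)) FZero)).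
      { eapply use_Zf; [do 2 apply pv_weak; exact Z'| apply one_le_succ| do 2 apply pv_weak; exact B|].
        eapply pv_contrapos; [| apply (lt_neq _ _ _ (lt_succ G2 nu))].
        apply le_anti; [apply le_succ|]. eapply tr_Le; [apply symI, pv_hyp| apply reflI| apply pv_weak, pv_hyp]. }
      clearbody G2.
      eapply transF; [exact R2|].
      eapply transF; [apply c_FAdd; [exact S| exact Zr]| apply f_add0].
    + set (G2 := And (And G1 _) _).
      assert (R2 : PV G2 (EqF (FSum (MLam IOne (IAdd nu IOne) h)) (FAdd (FSum (MLam IOne nu h)) (hv h (IAdd nu IOne))))) by (do 2 apply pv_weak; exact R).
      assert (S : PV G2 (EqF (FSum (MLam IOne nu h)) FZero)) by (eapply pv_mp; [eapply pv_andr; do 2 apply pv_weak; exact IH1| apply pv_hyp]).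
      assert (Em : PV G2 (EqI m (IAdd nu IOne))) by (apply le_succ_cases; [apply pv_weak, pv_hyp| apply pv_hyp]).
      assert (HV2 : PV G2 (EqF V (hv h m))) by (do 2 apply pv_weak; exact HV').
      clearbody G2.
      eapply transF; [exact R2|].
      eapply transF; [apply c_FAdd; [exact S| apply reflF]|].
      eapply transF; [apply f_add0l|].
      eapply transF; [apply cong_hv, symI, Em| apply symF; exact HV2].
  - set (G2 := And G1 _).
    assert (R2 : PV G2 (EqF (FSum (MLam IOne (IAdd nu IOne) h)) (FAdd (FSum (MLam IOne nu h)) (hv h (IAdd nu IOne))))) by (apply pv_weak; exact R).
    assert (N : PV G2 (Not (Le m nu))) by (eapply pv_contrapos; [apply le_succ_r, pv_hyp| apply pv_hyp]).
    assert (S : PV G2 (EqF (FSum (MLam IOne nu h)) FZero)) by (eapply pv_mp; [eapply pv_andr; apply pv_weak, IH1| exact N]).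
    assert (Zr : PV G2 (EqF (hv h (IAdd nu IOne)) FZero)).
    { eapply use_Zf; [apply pv_weak; exact Z'| apply one_le_succ| apply pv_weak; exact B|].
      eapply pv_contrapos; [| apply pv_hyp]. apply eq_le, symI, pv_hyp. }
    clearbody G2.
    eapply transF; [exact R2|].
    eapply transF; [apply c_FAdd; [exact S| exact Zr]| apply f_add0].
Qed.

Definition RSHyp (M m : iterm) (h : fterm) : form := And (Le IOne m) (And (Le m M) (Zf M m h)).

Lemma rowsum0 M m h : PV (RSHyp M m h) (EqF (FSum (MLam IOne M h)) (hv h m)).
Proof.
  set (p := psi (ren_i shI M) (ren_i shI m) (ren_f uu h) (ren_f shI (hv h m)) (IVar 0)).
  assert (A : PV (RSHyp M m h) (AllI p)).
  { apply pv_ind; [reflexivity| |].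
    - unfold p, psi, uu; ssimpl. apply pv_intro. apply pv_and; apply pv_intro.
      + eapply pv_contra; [| apply (not_one_le_zero _)].
        eapply le_trans; [| apply pv_hyp]. unfold RSHyp. do 2 apply pv_weak.
        eapply pv_t1; [| apply pv_id]; taut.
      + apply sum0, pv_orr, lamC.
    - assert (E1 : sub_form succ0 p = psi (ren_i shI M) (ren_i shI m) (ren_f uu h) (ren_f shI (hv h m)) (IAdd (IVar 0) IOne))
        by (unfold p, psi, uu; ssimpl; reflexivity).
      assert (E2 : ren_form shI (RSHyp M m h) = RSHyp (ren_i shI M) (ren_i shI m) (ren_f uu h))
        by (unfold RSHyp; rewrite <- ren_Zf; reflexivity).
      rewrite E1, E2. apply pv_intro. unfold RSHyp.
      apply rowsum_step.
      + apply pv_weak. eapply pv_t1; [|apply pv_id]; taut.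
      + apply pv_weak. eapply pv_t1; [|apply pv_id]; taut.
      + unfold hv, uu. replace (sub_f (inst2 IOne (ren_i shI m)) (ren_f (uprI (uprI shI)) h))
           with (ren_f shI (sub_f (inst2 IOne m) h)) by seq_solve. apply reflF.
      + apply pv_hyp. }
  pose proof (pv_inst _ _ M A) as X. unfold p, psi, uu in X. ssimpl_in X.
  eapply pv_mp; [eapply pv_andl; eapply pv_mp; [exact X| apply le_refl]|].
  unfold RSHyp. eapply pv_t1; [|apply pv_id]; taut.
Qed.

Lemma rowsum H M m h : PV H (Le IOne m) -> PV H (Le m M) -> PV H (Zf M m h) ->
  PV H (EqF (FSum (MLam IOne M h)) (hv h m)).
Proof.
  intros A B C. eapply pv_imp_hyp; [| apply rowsum0].
  unfold RSHyp; repeat apply pv_and; auto.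
Qed.

Lemma condF1 H q a b : PV H (of_iform q) -> PV H (EqF (FCond q a b) a).
Proof. intros P. eapply pv_mp; [ax| exact P]. Qed.
Lemma condF2 H q a b : PV H (Not (of_iform q)) -> PV H (EqF (FCond q a b) b).
Proof. intros P. eapply pv_mp; [ax| exact P]. Qed.

Lemma pow_rc0 N b : PV (EqI IZero IZero) (AllI (And (EqI (IRows (MPow (IVar 0) (ren_m shI (MLam N N b)))) (ren_i shI N))
                                                    (EqI (ICols (MPow (IVar 0) (ren_m shI (MLam N N b)))) (ren_i shI N)))).
Proof.
  apply pv_ind; [reflexivity| |].
  - ssimpl. 
    assert (P0 : PV (EqI IZero IZero) (EqM (MPow IZero (MLam N N b)) (MId (IRows (MLam N N b)))))
      by (apply pow0; eapply transI; [apply lamR| apply symI, lamC]).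
    apply pv_and.
    + eapply transI; [apply c_IRows, P0|]. eapply transI; [apply lamR| apply lamR].
    + eapply transI; [apply c_ICols, P0|]. eapply transI; [apply lamC| apply lamR].
  - ssimpl. apply pv_intro. set (A := MLam _ _ _).
    assert (P1 : PV (And (EqI IZero IZero) (And (EqI (IRows (MPow (IVar 0) A)) (ren_i shI N))
                                               (EqI (ICols (MPow (IVar 0) A)) (ren_i shI N))))
                 (EqM (MPow (IAdd (IVar 0) IOne) A) (MMul (MPow (IVar 0) A) A)))
      by (apply powS; unfold A; eapply transI; [apply lamR| apply symI, lamC]).
    apply pv_and.
    + eapply transI; [apply c_IRows, P1|]. unfold MMul. eapply transI; [apply lamR|].
      eapply pv_andl. apply pv_hyp.
    + eapply transI; [apply c_ICols, P1|]. unfold MMul. eapply transI; [apply lamC|]. unfold A. apply lamC.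
Qed.

Lemma pow_rows H N b k : PV H (EqI (IRows (MPow k (MLam N N b))) N).
Proof.
  pose proof (pv_inst _ _ k (pow_rc0 N b)) as X. ssimpl_in X.
  apply pv_of. eapply Pr_mp; [| apply Pr_reflI]. eapply pv_andl; exact X.
Qed.
Lemma pow_cols H N b k : PV H (EqI (ICols (MPow k (MLam N N b))) N).
Proof.
  pose proof (pv_inst _ _ k (pow_rc0 N b)) as X. ssimpl_in X.
  apply pv_of. eapply Pr_mp; [| apply Pr_reflI]. eapply pv_andr; exact X.
Qed.

Definition sigm : sub := Sub (fun n => match n with 0 => IMonus (IVar 1) IOne | S k => IVar (S (S k)) end) FVar MVar.
Definition Nt t := IAdd (IAdd t IOne) IOne.
Definition Ab t d := MLam (Nt t) (Nt t) (FCond (QEq j2 (IAdd i2 IOne)) (sub_f sigm d) FZero).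
Definition fk t d k := FEntry (MPow k (Ab t d)) IOne (IAdd k IOne).

Arguments Ab : simpl never.

Definition gP (P A : mterm) (K : iterm) : fterm :=
  FMul (FEntry (sh2m P) IOne i2) (FEntry (sh2m A) i2 (sh2i K)).

Arguments gP : simpl never.

Lemma mmul_entry G P A K : PV G (Le IOne (IRows P)) -> PV G (Le IOne K) -> PV G (Le K (ICols A)) ->
  PV G (EqF (FEntry (MMul P A) IOne K) (FSum (MLam (ICols P) IOne (gP P A K)))).
Proof.
  intros R1 K1 K2. unfold MMul. eapply transF; [apply lamE; auto; apply le_refl|].
  unfold gP, sh2m, sh2i. ssimpl. unfold gP, sh2m, sh2i. simpl. apply reflF.
Qed.

Definition Zcol (N m : iterm) (A : mterm) (K : iterm) : form :=
  AllI (Imp (And (And (Le IOne (IVar 0)) (Le (IVar 0) (ren_i shI N))) (Not (EqI (IVar 0) (ren_i shI m))))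
            (EqF (FEntry (ren_m shI A) (IVar 0) (ren_i shI K)) FZero)).

Definition CSHyp P A K N m := And (EqI (ICols P) N) (And (Le IOne m) (And (Le m N) (Zcol N m A K))).

Lemma inst0_up_i u : sub_i (instI (IVar 0)) (ren_i (uprI shI) u) = u.
Proof. rewrite sub_ren_gen_i. replace (srcomp (uprI shI) (instI (IVar 0))) with ids by
  (unfold srcomp, ids, uprI, instI; simpl; f_equal; apply functional_extensionality; intros [|n]; reflexivity).
  apply sub_id_syn. Qed.
Lemma inst0_up_f u : sub_f (instI (IVar 0)) (ren_f (uprI shI) u) = u.
Proof. rewrite sub_ren_gen_f. replace (srcomp (uprI shI) (instI (IVar 0))) with ids by
  (unfold srcomp, ids, uprI, instI; simpl; f_equal; apply functional_extensionality; intros [|n]; reflexivity).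
  apply sub_id_syn. Qed.
Lemma inst0_up_m u : sub_m (instI (IVar 0)) (ren_m (uprI shI) u) = u.
Proof. rewrite sub_ren_gen_m. replace (srcomp (uprI shI) (instI (IVar 0))) with ids by
  (unfold srcomp, ids, uprI, instI; simpl; f_equal; apply functional_extensionality; intros [|n]; reflexivity).
  apply sub_id_syn. Qed.
Lemma inst0_up_form u : sub_form (instI (IVar 0)) (ren_form (uprI shI) u) = u.
Proof. rewrite sub_ren_form. replace (srcomp (uprI shI) (instI (IVar 0))) with ids by
  (unfold srcomp, ids, uprI, instI; simpl; f_equal; apply functional_extensionality; intros [|n]; reflexivity).
  apply sub_id_form. Qed.

Lemma hv_T V m : hv (FEntry (sh2m V) j2 i2) m = FEntry V m IOne.
Proof. unfold hv, sh2m; simpl. rewrite sub_inst2_m. reflexivity. Qed.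
Lemma sig1_T V : sub_f sig1 (FEntry (sh2m V) j2 i2) = FEntry (ren_m shI V) (IVar 0) IOne.
Proof. unfold sh2m; simpl. f_equal. seq_solve. Qed.
Lemma gP_inst P A K a b : sub_f (inst2 a b) (gP P A K) = FMul (FEntry P IOne a) (FEntry A a K).
Proof. unfold gP, sh2m, sh2i; simpl. rewrite !sub_inst2_m, sub_inst2_i. reflexivity. Qed.
Lemma gP_ren P A K : ren_f uu (gP P A K) = gP (ren_m shI P) (ren_m shI A) (ren_i shI K).
Proof. unfold gP, sh2m, sh2i, uu; simpl. f_equal; f_equal; seq_solve. Qed.

Lemma colsum0 P A K N m : PV (CSHyp P A K N m)
  (EqF (FSum (MLam (ICols P) IOne (gP P A K))) (FMul (FEntry P IOne m) (FEntry A m K))).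
Proof.
  set (G := CSHyp P A K N m).
  assert (HN : PV G (EqI (ICols P) N)) by (unfold G, CSHyp; eapply pv_t1; [|apply pv_id]; taut).
  assert (H1 : PV G (Le IOne m)) by (unfold G, CSHyp; eapply pv_t1; [|apply pv_id]; taut).
  assert (H2 : PV G (Le m N)) by (unfold G, CSHyp; eapply pv_t1; [|apply pv_id]; taut).
  assert (HZ : PV (ren_form shI G) (ren_form shI (Zcol N m A K))) by
    (unfold G, CSHyp; generalize (Zcol N m A K); intro Z; simpl; eapply pv_t1; [|apply pv_id]; taut).
  assert (HN' : PV (ren_form shI G) (EqI (ICols (ren_m shI P)) (ren_i shI N))) by
    (unfold G, CSHyp; generalize (Zcol N m A K); intro Z; simpl; eapply pv_t1; [|apply pv_id]; taut).
  set (V := MLam (ICols P) IOne (gP P A K)).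
  eapply transF; [apply sumCol, lamC|]. unfold MTr.
  eapply transF; [apply c_FSum, c_MLam; [apply lamC| eapply transI; [apply lamR| exact HN]]|].
  eapply transF; [apply rowsum; [exact H1| exact H2|]|].
  - apply pv_gen, pv_intro. rewrite sig1_T.
    set (C := And (ren_form shI G) _).
    assert (J1 : PV C (Le IOne (IVar 0))) by (apply pv_t1 with (a := C); [taut| apply pv_id]).
    assert (J2 : PV C (Le (IVar 0) (ren_i shI N))) by (apply pv_t1 with (a := C); [taut| apply pv_id]).
    assert (J3 : PV C (Not (EqI (IVar 0) (ren_i shI m)))) by (apply pv_t1 with (a := C); [taut| apply pv_id]).
    assert (HZ' : PV C (ren_form shI (Zcol N m A K))) by (apply pv_weak, HZ).
    assert (HN'' : PV C (EqI (ICols (ren_m shI P)) (ren_i shI N))) by (apply pv_weak, HN').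
    clearbody C. clear HZ HN'.
    unfold Zcol in HZ'. simpl in HZ'. apply (pv_inst _ _ (IVar 0)) in HZ'. simpl in HZ'.
    rewrite !inst0_up_i, inst0_up_m in HZ'.
    change (ren_m shI V) with (MLam (ICols (ren_m shI P)) IOne (ren_f uu (gP P A K))). rewrite gP_ren.
    eapply transF; [apply lamE; [exact J1| eapply tr_Le; [apply reflI| apply symI, HN''| exact J2]| apply le_refl| apply le_refl]|].
    rewrite gP_inst.
    eapply transF; [apply c_FMul; [apply reflF| eapply pv_mp; [exact HZ'| apply pv_and; [apply pv_and|]; auto]]|].
    apply f_mul0.
  - rewrite hv_T. unfold V.
    eapply transF; [apply lamE; [exact H1| eapply tr_Le; [apply reflI| apply symI, HN| exact H2]| apply le_refl| apply le_refl]|].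
    rewrite gP_inst. apply reflF.
Qed.

Lemma Ab_rows H t d : PV H (EqI (IRows (Ab t d)) (Nt t)). Proof. unfold Ab. apply lamR. Qed.
Lemma Ab_cols H t d : PV H (EqI (ICols (Ab t d)) (Nt t)). Proof. unfold Ab. apply lamC. Qed.
Lemma Ab_entry H t d i j : PV H (Le IOne i) -> PV H (Le i (Nt t)) -> PV H (Le IOne j) -> PV H (Le j (Nt t)) ->
  PV H (EqF (FEntry (Ab t d) i j) (FCond (QEq j (IAdd i IOne)) (sub_f (inst2 i j) (sub_f sigm d)) FZero)).
Proof. intros. unfold Ab. eapply transF; [apply lamE; eauto|]. simpl. apply reflF. Qed.
Lemma ren_Ab t d : ren_m shI (Ab t d) = Ab (ren_i shI t) (ren_f (uprI shI) d).
Proof. unfold Ab; simpl. f_equal. f_equal. seq_solve. Qed.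
Lemma Ab_pow_rows H t d k : PV H (EqI (IRows (MPow k (Ab t d))) (Nt t)). Proof. unfold Ab. apply pow_rows. Qed.
Lemma Ab_pow_cols H t d k : PV H (EqI (ICols (MPow k (Ab t d))) (Nt t)). Proof. unfold Ab. apply pow_cols. Qed.
Lemma sigm_inst a b d : sub_f (inst2 a b) (sub_f sigm d) = sub_f (instI (IMonus a IOne)) d.
Proof. seq_solve. Qed.

Lemma one_le_Nt H t : PV H (Le IOne (Nt t)). Proof. apply one_le_succ. Qed.

Lemma step0 t d k : PV (Le k t) (EqF (fk t d (IAdd k IOne)) (FMul (fk t d k) (sub_f (instI k) d))).
Proof.
  set (G := Le k t). set (K := IAdd (IAdd k IOne) IOne). set (A := Ab t d).
  assert (KN : PV G (Le K (Nt t))) by (apply le_add1, le_add1, pv_id).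
  assert (K1N : PV G (Le (IAdd k IOne) (Nt t))) by (apply le_succ_r, le_add1, pv_id).
  assert (ASq : PV G (EqI (IRows A) (ICols A))) by (eapply transI; [apply Ab_rows| apply symI, Ab_cols]).
  unfold fk at 1. fold A.
  eapply transF; [apply c_FEntry; [apply powS, ASq| apply reflI| apply reflI]|].
  fold K.
  eapply transF; [apply mmul_entry|].
  { eapply tr_Le; [apply reflI| apply symI, Ab_pow_rows| apply one_le_Nt]. }
  { apply one_le_succ. }
  { eapply tr_Le; [apply reflI| apply symI, Ab_cols| exact KN]. }
  eapply transF; [eapply pv_imp_hyp; [| apply (colsum0 _ _ _ (Nt t) (IAdd k IOne))]|].
  { unfold CSHyp. apply pv_and; [apply Ab_pow_cols| apply pv_and; [apply one_le_succ| apply pv_and; [exact K1N|]]].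
    unfold Zcol. apply pv_gen, pv_intro. unfold A. rewrite ren_Ab. unfold G at 1. simpl.
    set (C := And _ _).
    assert (J1 : PV C (Le IOne (IVar 0))) by (apply pv_t1 with (a := C); [taut| apply pv_id]).
    assert (J2 : PV C (Le (IVar 0) (IAdd (IAdd (ren_i shI t) IOne) IOne))) by (apply pv_t1 with (a := C); [taut| apply pv_id]).
    assert (J3 : PV C (Not (EqI (IVar 0) (IAdd (ren_i shI k) IOne)))) by (apply pv_t1 with (a := C); [taut| apply pv_id]).
    assert (J4 : PV C (Le (ren_i shI k) (ren_i shI t))) by (apply pv_t1 with (a := C); [taut| apply pv_id]).
    clearbody C.
    eapply transF; [apply Ab_entry; [exact J1| exact J2| apply one_le_succ| apply le_add1, le_add1, J4]|].
    apply condF2. simpl. eapply pv_contrapos; [| exact J3].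
    apply symI, add1_inj, pv_hyp. }
  fold (fk t d k).
  apply c_FMul; [apply reflF|].
  eapply transF; [apply Ab_entry; [apply one_le_succ| exact K1N| apply one_le_succ| exact KN]|].
  eapply transF; [apply condF1; simpl; apply reflI|].
  rewrite sigm_inst. apply congI_f, monus_succ.
Qed.

Lemma sigm_sh_i u : sub_i sigm (ren_i shI u) = ren_i shI (ren_i shI u).
Proof. rewrite sub_ren_gen_i. rewrite (proj1 ren_ren_syn). rewrite ras_i. f_equal. Qed.
Lemma sigm_sh_f u : sub_f sigm (ren_f shI u) = ren_f shI (ren_f shI u).
Proof. rewrite sub_ren_gen_f. rewrite (proj1 (proj2 ren_ren_syn)). rewrite ras_f. f_equal. Qed.
Lemma sigm_sh_m u : sub_m sigm (ren_m shI u) = ren_m shI (ren_m shI u).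
Proof. rewrite sub_ren_gen_m. rewrite (proj1 (proj2 (proj2 ren_ren_syn))). rewrite ras_m. f_equal. Qed.

Lemma sigm_comm s d : sub_f (upsI (upsI s)) (sub_f sigm d) = sub_f sigm (sub_f (upsI s) d).
Proof.
  rewrite !ss_f. f_equal. unfold sscomp. f_equal; apply functional_extensionality.
  - intros [|n]; simpl; [reflexivity|]. rewrite sigm_sh_i. reflexivity.
  - intros n; simpl. rewrite sigm_sh_f. reflexivity.
  - intros n; simpl. rewrite sigm_sh_m. reflexivity.
Qed.

Lemma fk_sub s t d k : sub_f s (fk t d k) = fk (sub_i s t) (sub_f (upsI s) d) (sub_i s k).
Proof. unfold fk, Ab, Nt; simpl. rewrite sigm_comm. reflexivity. Qed.

Lemma ups_ren2sub x : upsI (ren2sub x) = ren2sub (uprI x).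
Proof. unfold upsI, ren2sub, uprI; simpl; f_equal; apply functional_extensionality; intros [|n]; reflexivity. Qed.

Lemma fk_ren t d k : ren_f shI (fk t d k) = fk (ren_i shI t) (ren_f (uprI shI) d) (ren_i shI k).
Proof. rewrite ras_f, fk_sub, ups_ren2sub, <- !ras_i, <- ras_f. reflexivity. Qed.

Lemma D_inst0 t : sub_i (instI IZero) (ren_i shI t) = t. Proof. apply sub_instI_i. Qed.

Lemma upinst_D s d : sub_f (upsI (instI s)) (ren_f (uprI shI) d) = d.
Proof.
  rewrite sub_ren_gen_f. replace (srcomp (uprI shI) (upsI (instI s))) with ids. apply sub_id_syn.
  unfold srcomp, ids, upsI, uprI, instI; simpl; f_equal; apply functional_extensionality; intros [|n]; reflexivity.
Qed.
Lemma upsucc_D d : sub_f (upsI succ0) (ren_f (uprI shI) d) = ren_f (uprI shI) d.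
Proof.
  rewrite sub_ren_gen_f, ras_f. f_equal.
  unfold srcomp, ren2sub, upsI, uprI, succ0; simpl; f_equal; apply functional_extensionality; intros [|n]; reflexivity.
Qed.

Lemma fk0 H t d : PV H (EqF (fk t d IZero) FOne).
Proof.
  unfold fk.
  eapply transF; [apply c_FEntry; [apply pow0; eapply transI; [apply Ab_rows| apply symI, Ab_cols]| apply reflI| apply reflI]|].
  unfold MId.
  assert (R : PV H (EqI (IRows (Ab t d)) (Nt t))) by apply Ab_rows.
  eapply transF; [apply lamE|].
  { apply le_refl. } { eapply tr_Le; [apply reflI| apply symI, R| apply one_le_Nt]. }
  { apply one_le_succ. } { eapply tr_Le; [apply reflI| apply symI, R| apply le_add1, le_0]. }
  simpl. apply condF1. simpl. apply symI, i_add0l.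
Qed.

Definition GA p d := AllI (Imp p (EqF d FOne)).
Definition GB p d := AllI (Imp (Not p) (EqF d FZero)).

Arguments fk : simpl never.

Lemma pos0 t p d : PV (And (AllLe t p) (GA p d)) (EqF (fk t d (IAdd t IOne)) FOne).
Proof.
  set (Hy := And (AllLe t p) (GA p d)).
  set (pi := Imp (Le (IVar 0) (IAdd (ren_i shI t) IOne)) (EqF (fk (ren_i shI t) (ren_f (uprI shI) d) (IVar 0)) FOne)).
  assert (A : PV Hy (AllI pi)).
  { apply pv_ind; [reflexivity| |].
    - unfold pi. cbn [sub_form sub_i sub_f]. rewrite fk_sub, upinst_D, !sub_instI_i.
      apply pv_intro, fk0.
    - assert (E : sub_form succ0 pi = Imp (Le (IAdd (IVar 0) IOne) (IAdd (ren_i shI t) IOne))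
                   (EqF (fk (ren_i shI t) (ren_f (uprI shI) d) (IAdd (IVar 0) IOne)) FOne)).
      { unfold pi. cbn [sub_form sub_i sub_f]. rewrite fk_sub, upsucc_D, sub_succ0_i. reflexivity. }
      rewrite E. clear E. apply pv_intro, pv_intro.
      unfold Hy, AllLe, GA. simpl.
      set (C := And (And _ _) _).
      assert (HA : PV C (AllI (Imp (Le (IVar 0) (ren_i (uprI shI) (ren_i shI t))) (ren_form (uprI shI) p))))
        by (apply pv_t1 with (a := C); [taut| apply pv_id]).
      assert (HG : PV C (AllI (Imp (ren_form (uprI shI) p) (EqF (ren_f (uprI shI) d) FOne))))
        by (apply pv_t1 with (a := C); [taut| apply pv_id]).
      assert (IH : PV C pi) by (apply pv_t1 with (a := C); [taut| apply pv_id]).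
      assert (B : PV C (Le (IAdd (IVar 0) IOne) (IAdd (ren_i shI t) IOne))) by apply pv_hyp.
      clearbody C. unfold pi in IH.
      apply (pv_inst _ _ (IVar 0)) in HA. apply (pv_inst _ _ (IVar 0)) in HG. simpl in HA, HG.
      rewrite inst0_up_i, inst0_up_form in HA. rewrite inst0_up_form, inst0_up_f in HG.
      assert (B' : PV C (Le (IVar 0) (ren_i shI t))) by (apply le_add1_inv, B).
      assert (Pp : PV C p) by (eapply pv_mp; [exact HA| exact B']).
      assert (D1 : PV C (EqF d FOne)) by (eapply pv_mp; [exact HG| exact Pp]).
      assert (F1 : PV C (EqF (fk (ren_i shI t) (ren_f (uprI shI) d) (IVar 0)) FOne))
        by (eapply pv_mp; [exact IH| apply le_succ_r, B']).
      pose proof (step0 (ren_i shI t) (ren_f (uprI shI) d) (IVar 0)) as S.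
      rewrite inst0_up_f in S.
      eapply transF; [eapply pv_imp_hyp; [exact B'| exact S]|].
      eapply transF; [apply c_FMul; [exact F1| exact D1]| apply f_mul1]. }
  pose proof (pv_inst _ _ (IAdd t IOne) A) as X. unfold pi in X. cbn [sub_form sub_i sub_f] in X.
  rewrite fk_sub, sub_instI_i, upinst_D in X. cbn [sub_i sI instI] in X.
  eapply pv_mp; [exact X| apply le_refl].
Qed.

Lemma ren_instD k d : ren_f shI (sub_f (instI k) d) = sub_f (instI (ren_i shI k)) (ren_f (uprI shI) d).
Proof. seq_solve. Qed.

Lemma zprop t d k : PV (And (Le k t) (EqF (sub_f (instI k) d) FZero)) (EqF (fk t d (IAdd t IOne)) FZero).
Proof.
  set (Hy := And (Le k t) (EqF (sub_f (instI k) d) FZero)).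
  set (D := ren_f (uprI shI) d).
  set (pi := Imp (Le (IAdd (ren_i shI k) IOne) (IVar 0)) (Imp (Le (IVar 0) (IAdd (ren_i shI t) IOne))
                (EqF (fk (ren_i shI t) D (IVar 0)) FZero))).
  assert (A : PV Hy (AllI pi)).
  { apply pv_ind; [reflexivity| |].
    - unfold pi. cbn [sub_form sub_i sub_f]. rewrite !sub_instI_i. cbn [sI instI].
      apply pv_intro. eapply pv_contra; [| apply (not_one_le_zero _)].
      eapply le_trans; [apply one_le_succ| apply pv_hyp].
    - assert (E : sub_form succ0 pi = Imp (Le (IAdd (ren_i shI k) IOne) (IAdd (IVar 0) IOne))
                   (Imp (Le (IAdd (IVar 0) IOne) (IAdd (ren_i shI t) IOne))
                   (EqF (fk (ren_i shI t) D (IAdd (IVar 0) IOne)) FZero))).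
      { unfold pi, D. cbn [sub_form sub_i sub_f]. rewrite fk_sub, upsucc_D, !sub_succ0_i. reflexivity. }
      rewrite E. clear E. apply pv_intro, pv_intro, pv_intro.
      unfold Hy. cbn [ren_form ren_i ren_f]. rewrite ren_instD. fold D.
      set (C := And (And (And _ _) _) _).
      assert (HK : PV C (Le (ren_i shI k) (ren_i shI t))) by (apply pv_t1 with (a := C); [taut| apply pv_id]).
      assert (HD : PV C (EqF (sub_f (instI (ren_i shI k)) D) FZero)) by (apply pv_t1 with (a := C); [taut| apply pv_id]).
      assert (IH : PV C pi) by (apply pv_t1 with (a := C); [taut| apply pv_id]).
      assert (B1 : PV C (Le (IAdd (ren_i shI k) IOne) (IAdd (IVar 0) IOne))) by (apply pv_t1 with (a := C); [taut| apply pv_id]).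
      assert (B2 : PV C (Le (IAdd (IVar 0) IOne) (IAdd (ren_i shI t) IOne))) by apply pv_hyp.
      clearbody C. unfold pi in IH.
      assert (B' : PV C (Le (IVar 0) (ren_i shI t))) by (apply le_add1_inv, B2).
      pose proof (step0 (ren_i shI t) D (IVar 0)) as S.
      eapply transF; [eapply pv_imp_hyp; [exact B'| exact S]|].
      apply pv_cases with (a := Le (IAdd (ren_i shI k) IOne) (IVar 0)).
      + eapply transF; [apply c_FMul; [|apply reflF]| apply f_mul0l].
        eapply pv_mp; [eapply pv_mp; [apply pv_weak, IH| apply pv_hyp]| apply pv_weak, le_succ_r, B'].
      + set (C2 := And C _).
        assert (E : PV C2 (EqI (IVar 0) (ren_i shI k))).
        { apply le_anti.
          - apply le_add1_inv, discr, not_le_lt, pv_hyp.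
          - apply le_add1_inv, pv_weak, B1. }
        assert (HD2 : PV C2 (EqF (sub_f (instI (ren_i shI k)) D) FZero)) by (apply pv_weak, HD).
        clearbody C2.
        eapply transF; [apply c_FMul; [apply reflF|]| apply f_mul0].
        eapply transF; [apply congI_f, E| exact HD2]. }
  pose proof (pv_inst _ _ (IAdd t IOne) A) as X. unfold pi, D in X. cbn [sub_form sub_i sub_f] in X.
  rewrite fk_sub, !sub_instI_i, upinst_D in X. cbn [sub_i sI instI] in X.
  eapply pv_mp; [eapply pv_mp; [exact X| apply le_add1, pv_andl with (b := EqF (sub_f (instI k) d) FZero), pv_id]| apply le_refl].
Qed.

Lemma neg0 t p d : PV (And (Not (EqF (fk t d (IAdd t IOne)) FZero)) (GB p d)) (AllLe t p).
Proof.
  unfold AllLe. apply pv_gen, pv_intro. unfold GB. cbn [ren_form]. rewrite fk_ren. cbn [ren_i].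
  set (D := ren_f (uprI shI) d).
  set (C := And (And _ _) _).
  assert (HN : PV C (Not (EqF (fk (ren_i shI t) D (IAdd (ren_i shI t) IOne)) FZero))) by (apply pv_t1 with (a := C); [taut| apply pv_id]).
  assert (HG : PV C (AllI (Imp (Not (ren_form (uprI shI) p)) (EqF D FZero)))) by (apply pv_t1 with (a := C); [taut| apply pv_id]).
  assert (HL : PV C (Le (IVar 0) (ren_i shI t))) by apply pv_hyp.
  clearbody C.
  apply (pv_inst _ _ (IVar 0)) in HG. cbn [sub_form] in HG. unfold D in HG. rewrite inst0_up_form, inst0_up_f in HG.
  apply pv_byc.
  assert (Z : PV (And C (Not p)) (EqF (sub_f (instI (IVar 0)) D) FZero)).
  { unfold D. rewrite inst0_up_f. eapply pv_mp; [apply pv_weak, HG| apply pv_hyp]. }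
  eapply pv_contra; [| apply pv_weak, HN].
  eapply pv_imp_hyp; [| apply zprop]. apply pv_and; [apply pv_weak, HL| exact Z].
Qed.

Lemma good_allle t p d : Good p d -> Good (AllLe t p) (fk t d (IAdd t IOne)).
Proof.
  intros [G1 G2]. split.
  - eapply pv_imp_hyp; [| apply pos0]. apply pv_and; [apply pv_id|].
    unfold GA. apply pv_gen. apply pv_of, G1.
  - apply pv_byc.
    eapply pv_contra; [| apply pv_weak, pv_id].
    eapply pv_imp_hyp; [| apply neg0]. apply pv_and; [apply pv_hyp|].
    unfold GB. apply pv_gen. apply pv_of, G2.
Qed.

Definition rS (x : ren) (s : srt) : nat -> nat :=
  match s with SI => rI x | SF => rF x | SM => rM x end.

Ltac bsplit := repeat match goal with
  | H : (_ || _) = true |- _ => apply orb_true_iff in H; destruct H end.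

Ltac fin k := exists k; split; [simpl; rewrite ?orb_true_iff; tauto| assumption].

Lemma occ_ren_syn :
  (forall u x s n, occ_i s n (ren_i x u) = true -> exists k, occ_i s k u = true /\ rS x s k = n) /\
  (forall u x s n, occ_f s n (ren_f x u) = true -> exists k, occ_f s k u = true /\ rS x s k = n) /\
  (forall u x s n, occ_m s n (ren_m x u) = true -> exists k, occ_m s k u = true /\ rS x s k = n) /\
  (forall u x s n, occ_q s n (ren_q x u) = true -> exists k, occ_q s k u = true /\ rS x s k = n).
Proof.
  apply syn_ind; intros; simpl in *; try discriminate;
  try (destruct s; try discriminate; apply Nat.eqb_eq in H; subst; exists n; simpl; rewrite Nat.eqb_refl; auto; fail);
  bsplit;
  match goal with
  | IH : forall _ _ _, _ -> exists _, _ , H : _ = true |- _ =>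
      let k := fresh "k" in destruct (IH _ _ _ H) as (k & ? & ?); fin k
  | _ => idtac
  end.
  destruct s; simpl in H2; destruct (H1 _ _ _ H2) as (k & Hk & Hr); simpl in Hr.
  - destruct k as [|[|k]]; simpl in Hr; try discriminate. inversion Hr; subst.
    exists k; split; [simpl; rewrite !orb_true_iff; auto| reflexivity].
  - exists k; split; [simpl; rewrite !orb_true_iff; auto| exact Hr].
  - exists k; split; [simpl; rewrite !orb_true_iff; auto| exact Hr].
Qed.

Lemma occ_ren_bwd_syn :
  (forall u x s k, occ_i s k u = true -> occ_i s (rS x s k) (ren_i x u) = true) /\
  (forall u x s k, occ_f s k u = true -> occ_f s (rS x s k) (ren_f x u) = true) /\
  (forall u x s k, occ_m s k u = true -> occ_m s (rS x s k) (ren_m x u) = true) /\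
  (forall u x s k, occ_q s k u = true -> occ_q s (rS x s k) (ren_q x u) = true).
Proof.
  apply syn_ind; intros; simpl in *; try discriminate;
  try (destruct s; try discriminate; apply Nat.eqb_eq in H; subst; simpl; apply Nat.eqb_refl; fail);
  bsplit; rewrite ?orb_true_iff;
  repeat match goal with
  | IH : forall _ _ _, ?o _ _ ?u = true -> _, H : ?o _ ?kk ?u = true |- _ =>
      is_var kk; let HH := fresh in pose proof (IH x _ _ H) as HH; clear H
  end; try tauto.
  destruct s; simpl in *.
  - right. specialize (H1 (uprI (uprI x)) SI (S (S k))). simpl in H1. auto.
  - right. specialize (H1 (uprI (uprI x)) SF k). simpl in H1. auto.
  - right. specialize (H1 (uprI (uprI x)) SM k). simpl in H1. auto.
Qed.

Lemma occ_shI_i s n u : occ_i s (bump SI s n) (ren_i shI u) = true -> occ_i s n u = true.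
Proof. intro H. destruct (proj1 occ_ren_syn _ _ _ _ H) as (k & Hk & Hr). destruct s; simpl in Hr; try inversion Hr; subst; auto. Qed.
Lemma occ_shI_f s n u : occ_f s (bump SI s n) (ren_f shI u) = true -> occ_f s n u = true.
Proof. intro H. destruct (proj1 (proj2 occ_ren_syn) _ _ _ _ H) as (k & Hk & Hr). destruct s; simpl in Hr; try inversion Hr; subst; auto. Qed.
Lemma occ_shI_m s n u : occ_m s (bump SI s n) (ren_m shI u) = true -> occ_m s n u = true.
Proof. intro H. destruct (proj1 (proj2 (proj2 occ_ren_syn)) _ _ _ _ H) as (k & Hk & Hr). destruct s; simpl in Hr; try inversion Hr; subst; auto. Qed.

Definition occS (sg : sub) (s' : srt) (k : nat) (s : srt) (n : nat) : bool :=
  match s' with SI => occ_i s n (sI sg k) | SF => occ_f s n (sF sg k) | SM => occ_m s n (sM sg k) end.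

Ltac fin2 s' k := exists s', k; split; [simpl; rewrite ?orb_true_iff; tauto| assumption].

Lemma occ_sub_syn :
  (forall u sg s n, occ_i s n (sub_i sg u) = true -> exists s' k, occ_i s' k u = true /\ occS sg s' k s n = true) /\
  (forall u sg s n, occ_f s n (sub_f sg u) = true -> exists s' k, occ_f s' k u = true /\ occS sg s' k s n = true) /\
  (forall u sg s n, occ_m s n (sub_m sg u) = true -> exists s' k, occ_m s' k u = true /\ occS sg s' k s n = true) /\
  (forall u sg s n, occ_q s n (sub_q sg u) = true -> exists s' k, occ_q s' k u = true /\ occS sg s' k s n = true).
Proof.
  apply syn_ind; intros; simpl in *; try discriminate;
  try (match goal with |- exists s' k, _ ?v _ = true /\ _ => 
        let so := match v with IVar _ => SI | FVar _ => SF | MVar _ => SM end in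
        exists so, n; simpl; rewrite Nat.eqb_refl; auto end; fail);
  bsplit;
  match goal with
  | IH : forall _ _ _, _ -> exists _ _, _ , H : _ = true |- _ =>
      let s' := fresh "s" in let k := fresh "k" in destruct (IH _ _ _ H) as (s' & k & ? & ?); fin2 s' k
  | _ => idtac
  end.
  - exists SI, n; simpl; rewrite Nat.eqb_refl; auto.
  - exists SF, n; simpl; rewrite Nat.eqb_refl; auto.
  - exists SM, n; simpl; rewrite Nat.eqb_refl; auto.
  - destruct (H1 _ _ _ H2) as (s' & k & Hk & Ho).
    destruct s'; simpl in Ho.
    + destruct k as [|[|k]].
      * destruct s; simpl in Ho; discriminate.
      * destruct s; simpl in Ho; discriminate.
      * simpl in Ho. apply occ_shI_i in Ho. apply occ_shI_i in Ho.
        exists SI, k. simpl. rewrite Hk, !orb_true_r. auto.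
    + apply occ_shI_f in Ho. apply occ_shI_f in Ho.
      exists SF, k. simpl. rewrite Hk, !orb_true_r. auto.
    + apply occ_shI_m in Ho. apply occ_shI_m in Ho.
      exists SM, k. simpl. rewrite Hk, !orb_true_r. auto.
Qed.

Lemma occ_fk s n t d k : occ_f s n (fk t d k) = true ->
  occ_i s n t = true \/ occ_i s n k = true \/ occ_f s (bump SI s n) d = true.
Proof.
  unfold fk, Ab, Nt; simpl. intro H. bsplit; auto;
  try (rewrite orb_false_r in H; auto);
  try (destruct s; simpl in H; discriminate).
  destruct (proj1 (proj2 occ_sub_syn) _ _ _ _ H) as (s' & k0 & Hk & Ho).
  destruct s'; simpl in Ho.
  - destruct k0 as [|k0]; [destruct s; simpl in Ho; try discriminate; rewrite orb_false_r in Ho; destruct n; discriminate|].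
    destruct s; simpl in Ho; try discriminate. apply Nat.eqb_eq in Ho. inversion Ho; subst. auto.
  - destruct s; simpl in Ho; try discriminate. apply Nat.eqb_eq in Ho. subst. auto.
  - destruct s; simpl in Ho; try discriminate. apply Nat.eqb_eq in Ho. subst. auto.
Qed.

Definition QM A B := AllLe (IRows A) (AllLe (ren_i shI (ICols A)) (EqF (FEntry (sh2m A) i2 j2) (FEntry (sh2m B) i2 j2))).
Definition EM A B := And (And (EqI (IRows A) (IRows B)) (EqI (ICols A) (ICols B))) (QM A B).
Definition d0 A B := d_eqF (FEntry (sh2m A) i2 j2) (FEntry (sh2m B) i2 j2).
Definition d1 A B := fk (ren_i shI (ICols A)) (d0 A B) (IAdd (ren_i shI (ICols A)) IOne).
Definition dM A B := FMul (FMul (d_eqI (IRows A) (IRows B)) (d_eqI (ICols A) (ICols B)))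
                          (fk (IRows A) (d1 A B) (IAdd (IRows A) IOne)).

Lemma good_EM A B : Good (EM A B) (dM A B).
Proof.
  unfold EM, dM, QM, d1, d0. apply good_and; [apply good_and; apply good_eqI|].
  apply good_allle, good_allle, good_eqF.
Qed.

Lemma EM_sub A X : sub_form (instM X) (EM (ren_m shM A) (MVar 0)) = EM A X.
Proof.
  unfold EM, QM, AllLe, sh2m. simpl. autorewrite with ssimpl. reflexivity.
Qed.

Lemma EqM_EM A B : PV (EqM A B) (EM A B).
Proof.
  refine (pv_rwM _ A B (EM (ren_m shM A) (MVar 0)) _ _ _ _ (pv_id _) _).
  - symmetry; apply EM_sub.
  - symmetry; apply EM_sub.
  - unfold EM, QM, AllLe. apply pv_and; [apply pv_and; apply reflI|].
    apply pv_gen, pv_intro, pv_gen, pv_intro. apply reflF.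
Qed.

Lemma EM_EqM A B : PV (EM A B) (EqM A B).
Proof. eapply pv_mp; [ax| apply pv_id]. Qed.

Lemma good_EqM A B : Good (EqM A B) (dM A B).
Proof. eapply good_transfer; [apply EqM_EM| apply EM_EqM| apply good_EM]. Qed.

Lemma rS_shI s n : rS shI s n = bump SI s n.
Proof. destruct s; reflexivity. Qed.

Lemma occ_ren_shI_i s n u : occ_i s n u = true -> occ_i s (bump SI s n) (ren_i shI u) = true.
Proof. intro H. rewrite <- rS_shI. apply (proj1 occ_ren_bwd_syn). exact H. Qed.

Ltac bs := repeat match goal with
  | H : (_ || _) = true |- _ => apply orb_true_iff in H; destruct H
  | H : _ \/ _ |- _ => destruct H end.
Ltac bgoal := simpl; rewrite ?orb_true_iff; auto 6.

Lemma fv_le a b : fv_sub (d_le a b) (Le a b).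
Proof. intros s n H. simpl in *. rewrite !orb_false_r in H. exact H. Qed.
Lemma fv_eqI a b : fv_sub (d_eqI a b) (EqI a b).
Proof. intros s n H. simpl in *. rewrite !orb_false_r in H. exact H. Qed.
Lemma fv_eqF a b : fv_sub (d_eqF a b) (EqF a b).
Proof. intros s n H. simpl in *. bs; try discriminate; bgoal. Qed.
Lemma fv_not p d : fv_sub d p -> fv_sub (d_not d) (Not p).
Proof. intros F s n H. simpl in *. auto. Qed.
Lemma fv_and p q d e : fv_sub d p -> fv_sub e q -> fv_sub (FMul d e) (And p q).
Proof. intros F G s n H. simpl in *. bs; bgoal. Qed.
Lemma fv_or p q d e : fv_sub d p -> fv_sub e q -> fv_sub (d_not (FMul (d_not d) (d_not e))) (Or p q).
Proof. intros F G s n H. simpl in *. bs; try discriminate; bgoal. Qed.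
Lemma fv_imp p q d e : fv_sub d p -> fv_sub e q -> fv_sub (d_not (FMul d (d_not e))) (Imp p q).
Proof. intros F G s n H. simpl in *. bs; try discriminate; bgoal. Qed.
Lemma fv_allle t p d : fv_sub d p -> fv_sub (fk t d (IAdd t IOne)) (AllLe t p).
Proof.
  intros F s n H. apply occ_fk in H. unfold AllLe. cbn [occ_form].
  destruct H as [H|[H|H]].
  - rewrite (occ_ren_shI_i _ _ _ H). rewrite orb_true_r. reflexivity.
  - simpl in H. rewrite orb_false_r in H. rewrite (occ_ren_shI_i _ _ _ H). rewrite orb_true_r. reflexivity.
  - rewrite (F _ _ H). apply orb_true_r.
Qed.
Lemma fv_EqM A B : fv_sub (dM A B) (EqM A B).
Proof.
  intros s n H. unfold dM, d_eqI in H. cbn [occ_f occ_q occ_i occ_m] in H. cbn [occ_form].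
  bs; try discriminate; try (rewrite ?orb_false_r in H; bgoal; fail).
  apply orb_true_iff.
  apply occ_fk in H. destruct H as [H|[H|H]].
  - simpl in H. auto.
  - simpl in H. rewrite orb_false_r in H. simpl in H. auto.
  - unfold d1 in H. apply occ_fk in H. destruct H as [H|[H|H]].
    + simpl in H. apply (occ_shI_m s n A) in H. auto.
    + simpl in H. rewrite orb_false_r in H. apply (occ_shI_m s n A) in H. auto.
    + unfold d0, d_eqF, sh2m in H. simpl in H. bs; try discriminate;
      try (apply (occ_shI_m s _ (ren_m shI A)), (occ_shI_m s n A) in H; auto; fail);
      try (apply (occ_shI_m s _ (ren_m shI B)), (occ_shI_m s n B) in H; auto; fail);
      destruct s; simpl in H; try discriminate.
Qed.

Lemma main_aux phi : SigmaB0 phi -> exists d, fv_sub d phi /\ Good phi d.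
Proof.
  induction 1.
  - exists (d_le a b); split; [apply fv_le| apply good_le].
  - exists (d_eqI a b); split; [apply fv_eqI| apply good_eqI].
  - exists (d_eqF a b); split; [apply fv_eqF| apply good_eqF].
  - exists (dM a b); split; [apply fv_EqM| apply good_EqM].
  - destruct IHSigmaB0 as (d & F & G). exists (d_not d); split; [apply fv_not| apply good_not]; auto.
  - destruct IHSigmaB0_1 as (d & F & G). destruct IHSigmaB0_2 as (e & F' & G').
    exists (FMul d e); split; [apply fv_and| apply good_and]; auto.
  - destruct IHSigmaB0_1 as (d & F & G). destruct IHSigmaB0_2 as (e & F' & G').
    eexists; split; [apply fv_or| apply good_or]; eauto.
  - destruct IHSigmaB0_1 as (d & F & G). destruct IHSigmaB0_2 as (e & F' & G').
    eexists; split; [apply fv_imp| apply good_imp]; eauto.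
  - destruct IHSigmaB0 as (d & F & G).
    eexists; split; [apply fv_allle| apply good_allle]; eauto.
  - destruct IHSigmaB0 as (d & F & G). unfold ExLe.
    eexists; split; [apply fv_not, fv_allle, fv_not| apply good_not, good_allle, good_not]; eauto.
Qed.

Theorem mainTheorem9 :
  forall phi : form, SigmaB0 phi ->
    exists delta : fterm,
      fv_sub delta phi /\
      LAP_proves (Imp phi (EqF delta FOne)) /\
      LAP_proves (Imp (Not phi) (EqF delta FZero)) /\
      LAP_proves (Iff phi (EqF delta FOne)).
Proof.
  intros phi H. destruct (main_aux phi H) as (d & F & G).
  exists d. split; [exact F|]. split; [apply G|]. split; [apply G|]. apply good_iff, G.
Qed.
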